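(* Let $R=\mathbb{Z}[t]/(t^3)$ and let $p$ be a prime. For complex $s_1,s_2$ with real parts sufficiently large, \[ \zeta_{R,p}(s_1,s_2)=(1-p^{-1})^{-2}\int_{\substack{(x,y,z)\in\mathbb{Z}_p^3\\ |z|^2\le|x|}} |x|^{s_1-2}\,|z|^{s_1-1}\,\max\{|x|,|y|,|z|\}^{s_2-s_1}\,dx\,dy\,dz , \] where $dx\,dy\,dz$ is the Haar measure on $\mathbb{Z}_p^3$ normalized to have total mass $1$, and $|\cdot|$ is the $p$-adic absolute value with $|p|=p^{-1}$.
   Context: Let $R=\mathbb{Z}[t]/(t^3)$, viewed as the additive group $\mathbb{Z}^3$ with basis $t^2,t,1$. A subring $S$ of $R$ means an additive subgroup of finite index that contains $1$ and is closed under multiplication. For a finite-index subgroup $S\subseteq R$ there are unique positive integers $\alpha_1(S),\alpha_2(S),\alpha_3(S)$ with $\alpha_{i+1}\mid\alpha_i$ and $R/S\cong \mathbb{Z}/\alpha_1\mathbb{Z}\oplus\mathbb{Z}/\alpha_2\mathbb{Z}\oplus\mathbb{Z}/\alpha_3\mathbb{Z}$. This tuple is called the cotype of $S$. For a subring $S$ one always has $\alpha_3(S)=1$. For a prime $p$ define \[ \zeta_{R,p}(s_1,s_2)=\sum_{S}\alpha_1(S)^{-s_1}\alpha_2(S)^{-s_2}, \] where the sum runs over all subrings $S$ of $R$ whose index $[R:S]$ is a power of $p$ (including index $1$). *)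

(* Defs.v *)
From Stdlib Require Import Reals ZArith Znumtheory List.
From Coquelicot Require Import Coquelicot.
Import ListNotations.

Local Open Scope R_scope.

Definition cexp (z : C) : C :=
  (exp (Re z) * cos (Im z), exp (Re z) * sin (Im z)).

(* r^s for r > 0 (= exp(s ln r)); by convention 0^s = 0 (used only where
   Re s > 0, or where the whole product vanishes). *)
Definition rpowC (r : R) (s : C) : C :=
  if Rle_dec r 0 then RtoC 0 else cexp (Cmult (RtoC (ln r)) s).

Fixpoint vp_fuel (fuel : nat) (p x : Z) : nat :=
  match fuel with
  | O => O
  | S f => if andb (Z.eqb (Z.modulo x p) 0) (negb (Z.eqb x 0))
           then S (vp_fuel f p (Z.div x p)) else O
  end.

(* v_p(x) for x <> 0 *)
Definition vp (p x : Z) : nat := vp_fuel (Z.to_nat (Z.abs x)) p x.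

Definition pabs (p x : Z) : R :=
  if Z.eqb x 0 then 0 else / (IZR p) ^ (vp p x).

Definition csum_list {T : Type} (f : T -> C) (l : list T) : C :=
  fold_right (fun t acc => Cplus (f t) acc) (RtoC 0) l.

Definition csum_nat (N : nat) (f : nat -> C) : C := csum_list f (seq 0 N).

(* Unconditional (net of finite subsets) convergence of a family indexed by
   {t : T | A t} to L. *)
Definition HasSum {T : Type} (A : T -> Prop) (f : T -> C) (L : C) : Prop :=
  forall eps : R, 0 < eps ->
    exists F0 : list T, NoDup F0 /\ (forall t, In t F0 -> A t) /\
      forall F : list T, NoDup F -> (forall t, In t F -> A t) -> incl F0 F ->
        Cmod (Cminus (csum_list f F) L) < eps.

Definition CSeqLim (u : nat -> C) (L : C) : Prop :=
  forall eps : R, 0 < eps -> exists N : nat, forall n : nat, (N <= n)%nat ->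
    Cmod (Cminus (u n) L) < eps.

(* An element a t^2 + b t + c is the triple (a,b,c) (basis t^2, t, 1).
   A subset of R is a predicate S a b c. *)
Definition subsetR := Z -> Z -> Z -> Prop.

(* (a t^2 + b t + c)(a' t^2 + b' t + c') mod t^3 *)
Definition mulR (u v : Z * Z * Z) : Z * Z * Z :=
  let '(a, b, c) := u in let '(a', b', c') := v in
  ((a * c' + b * b' + c * a')%Z, (b * c' + c * b')%Z, (c * c')%Z).

Definition inS (S : subsetR) (u : Z * Z * Z) : Prop :=
  let '(a, b, c) := u in S a b c.

(* additive subgroup, contains 1, closed under multiplication
   (finite index is part of IsCotype below) *)
Definition IsSubringSet (S : subsetR) : Prop :=
  S 0%Z 0%Z 0%Z /\
  (forall a b c a' b' c', S a b c -> S a' b' c' ->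
      S (a + a')%Z (b + b')%Z (c + c')%Z) /\
  (forall a b c, S a b c -> S (- a)%Z (- b)%Z (- c)%Z) /\
  S 0%Z 0%Z 1%Z /\
  (forall u v, inS S u -> inS S v -> inS S (mulR u v)).

(* R/S is isomorphic to Z/a1 (+) Z/a2 (+) Z/a3 with a3 | a2 | a1, all > 0:
   there is a surjective group homomorphism phi : Z^3 -> Z/a1 x Z/a2 x Z/a3
   (given by an integer 3x3 matrix m) whose kernel is exactly S. *)
Definition IsCotype (S : subsetR) (a1 a2 a3 : Z) : Prop :=
  (0 < a3)%Z /\ (a3 | a2)%Z /\ (a2 | a1)%Z /\
  exists m11 m12 m13 m21 m22 m23 m31 m32 m33 : Z,
    let phi1 a b c := (m11 * a + m12 * b + m13 * c)%Z in
    let phi2 a b c := (m21 * a + m22 * b + m23 * c)%Z in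
    let phi3 a b c := (m31 * a + m32 * b + m33 * c)%Z in
    (forall a b c, S a b c <->
        ((a1 | phi1 a b c) /\ (a2 | phi2 a b c) /\ (a3 | phi3 a b c))%Z) /\
    (forall w1 w2 w3, exists a b c,
        ((a1 | phi1 a b c - w1) /\ (a2 | phi2 a b c - w2)
         /\ (a3 | phi3 a b c - w3))%Z).

(* index set of the zeta function: subrings S of p-power index, together
   with their cotype (a1,a2,a3) (which is unique) *)
Definition ZetaIndex (p : Z) (t : subsetR * Z * Z * Z) : Prop :=
  let '(Ssub, a1, a2, a3) := t in
  IsSubringSet Ssub /\ IsCotype Ssub a1 a2 a3 /\
  exists k : nat, (a1 * a2 * a3)%Z = (p ^ Z.of_nat k)%Z.

Definition ZetaTerm (s1 s2 : C) (t : subsetR * Z * Z * Z) : C :=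
  let '(Ssub, a1, a2, a3) := t in
  Cmult (rpowC (IZR a1) (Copp s1)) (rpowC (IZR a2) (Copp s2)).

Definition integrand (p : Z) (s1 s2 : C) (x y z : Z) : C :=
  if Rle_dec (pabs p z ^ 2) (pabs p x) then
    Cmult (Cmult (rpowC (pabs p x) (Cminus s1 (RtoC 2)))
                 (rpowC (pabs p z) (Cminus s1 (RtoC 1))))
          (rpowC (Rmax (pabs p x) (Rmax (pabs p y) (pabs p z))) (Cminus s2 s1))
  else RtoC 0.

(* Riemann sum of level n for the normalized Haar measure on Z_p^3: the
   cosets of p^n Z_p^3 (each of measure p^{-3n}) with representatives
   x,y,z in {0,...,p^n - 1}. *)
Definition RiemannSum (p : Z) (s1 s2 : C) (n : nat) : C :=
  let N := Z.to_nat (p ^ Z.of_nat n) in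
  Cmult (RtoC (/ (IZR p) ^ (3 * n)))
    (csum_nat N (fun i => csum_nat N (fun j => csum_nat N (fun k =>
       integrand p s1 s2 (Z.of_nat i) (Z.of_nat j) (Z.of_nat k))))).

Definition HaarIntegral (p : Z) (s1 s2 : C) (I : C) : Prop :=
  CSeqLim (RiemannSum p s1 s2) I.

(* Main.v *)
Require Import Defs.
From Stdlib Require Import Reals ZArith Znumtheory List.
From Coquelicot Require Import Coquelicot.
From Stdlib Require Import Lia Lra Permutation Classical FunctionalExtensionality PropExtensionality.
Import ListNotations.

Module PartA.
Import ListNotations.

Definition PP (p : Z) (n : nat) : Z := (p ^ Z.of_nat n)%Z.

Lemma PP_0 p : PP p 0 = 1%Z.
Proof. reflexivity. Qed.

Lemma PP_S p n : PP p (S n) = (p * PP p n)%Z.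
Proof. unfold PP. rewrite Nat2Z.inj_succ, Z.pow_succ_r by lia. ring. Qed.

Lemma PP_add p a b : PP p (a + b) = (PP p a * PP p b)%Z.
Proof. unfold PP. rewrite Nat2Z.inj_add, Z.pow_add_r by lia. ring. Qed.

Lemma PP_pos p n : (1 < p)%Z -> (0 < PP p n)%Z.
Proof. intros. unfold PP. apply Z.pow_pos_nonneg; lia. Qed.

Lemma PP_ge1 p n : (1 < p)%Z -> (1 <= PP p n)%Z.
Proof. intros. pose proof (PP_pos p n H). lia. Qed.

Lemma PP_lt p a b : (1 < p)%Z -> (a < b)%nat -> (PP p a < PP p b)%Z.
Proof.
  intros Hp Hab. replace b with (a + S (b - a - 1))%nat by lia.
  rewrite PP_add, PP_S. pose proof (PP_pos p a Hp). pose proof (PP_pos p (b-a-1) Hp).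
  assert (2 <= p * PP p (b - a - 1))%Z by nia. nia.
Qed.

Lemma PP_div_le p a b : (1 < p)%Z -> (PP p a | PP p b)%Z -> (a <= b)%nat.
Proof.
  intros Hp Hd. destruct (le_lt_dec a b) as [h|h]; auto.
  exfalso. pose proof (PP_lt p b a Hp h). pose proof (PP_pos p b Hp).
  apply Z.divide_pos_le in Hd; lia.
Qed.

Lemma PP_divide p a b : (a <= b)%nat -> (PP p a | PP p b)%Z.
Proof.
  intros h. replace b with (a + (b - a))%nat by lia. rewrite PP_add.
  exists (PP p (b - a)). ring.
Qed.

Lemma prime_gt1 p : prime p -> (1 < p)%Z.
Proof. intros H; destruct H; lia. Qed.

Lemma pp_divisor p d k : prime p -> (0 < d)%Z -> (d | PP p k)%Z -> exists e, d = PP p e.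
Proof.
  intros Hp Hd Hdk. unfold PP in Hdk.
  destruct (Zpow_facts.Zdivide_power_2 d p (Z.of_nat k)) as [m Hm]; try lia; auto.
  destruct (Z_lt_le_dec m 0) as [hm|hm].
  - rewrite Z.pow_neg_r in Hm by lia. lia.
  - exists (Z.to_nat m). unfold PP. rewrite Z2Nat.id; auto.
Qed.

Lemma pp_sq p : prime p -> forall e n u, (PP p e * PP p e | n * (n - PP p e * u))%Z -> (PP p e | n)%Z.
Proof.
  intros Hp. pose proof (prime_gt1 p Hp) as Hp1.
  induction e; intros n u H.
  - rewrite PP_0. apply Z.divide_1_l.
  - rewrite PP_S in *.
    assert (Hpn : (p | n)%Z).
    { assert (Hp2: (p | n * (n - p * PP p e * u))%Z).
      { eapply Z.divide_trans; [|exact H]. exists (PP p e * PP p e * p)%Z. ring. }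
      destruct (prime_mult p Hp _ _ Hp2) as [h|h]; auto.
      replace n with ((n - p * PP p e * u) + p * (PP p e * u))%Z by ring.
      apply Z.divide_add_r; auto. exists (PP p e * u)%Z. ring. }
    destruct Hpn as [n1 Hn1]. subst n.
    assert (H2 : (PP p e * PP p e | n1 * (n1 - PP p e * u))%Z).
    { destruct H as [q Hq]. exists q.
      assert (p * p <> 0)%Z by nia.
      apply (Z.mul_reg_l _ _ (p*p)%Z); auto. rewrite <- (Z.mul_comm p n1) in Hq.
      replace (p * p * (n1 * (n1 - PP p e * u)))%Z with (p * n1 * (p * n1 - p * PP p e * u))%Z by ring.
      rewrite Hq. ring. }
    destruct (IHe n1 u H2) as [q Hq]. exists q. rewrite Hq. ring.
Qed.

End PartA.
Import PartA.

Module PartB.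
Import ListNotations.

Lemma val_decomp p : (1 < p)%Z -> forall x, x <> 0%Z -> exists v u, x = (PP p v * u)%Z /\ ~ (p | u)%Z.
Proof.
  intros Hp. intros x. remember (Z.to_nat (Z.abs x)) as f eqn:Hf.
  revert x Hf. induction f as [f IH] using lt_wf_ind. intros x Hf Hx.
  destruct (Zdivide_dec p x) as [[q Hq]|Hn].
  - assert (q <> 0%Z) by (intro; subst; lia).
    assert (Z.abs q < Z.abs x)%Z.
    { subst x. rewrite Z.abs_mul. assert (0 < Z.abs q)%Z by lia. nia. }
    destruct (IH (Z.to_nat (Z.abs q)) ltac:(lia) q eq_refl H) as [v [u [E N]]].
    exists (S v), u. rewrite PP_S. split; auto. rewrite Hq, E. ring.
  - exists 0%nat, x. rewrite PP_0. split; auto. ring.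
Qed.

Lemma vp_fuel_spec p : (1 < p)%Z -> forall f x v u, x <> 0%Z -> (Z.to_nat (Z.abs x) <= f)%nat ->
  x = (PP p v * u)%Z -> ~ (p | u)%Z -> vp_fuel f p x = v.
Proof.
  intros Hp. induction f; intros x v u Hx Hf E N.
  - lia.
  - simpl. destruct v as [|v].
    + rewrite PP_0 in E. replace (x mod p =? 0)%Z with false; [reflexivity|].
      symmetry. apply Z.eqb_neq. intro h. apply N. rewrite Z.mul_1_l in E. rewrite <- E.
      apply Z.mod_divide; lia.
    + rewrite PP_S in E.
      assert (Hm : (x mod p = 0)%Z). { apply Z.mod_divide; try lia. exists (PP p v * u)%Z. rewrite E. ring. }
      rewrite Hm. replace (x =? 0)%Z with false by (symmetry; apply Z.eqb_neq; auto). simpl.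
      f_equal. assert (Hd : (x / p = PP p v * u)%Z).
      { rewrite E. replace (p * PP p v * u)%Z with ((PP p v * u) * p)%Z by ring. apply Z.div_mul. lia. }
      apply (IHf (x / p)%Z v u); auto.
      * rewrite Hd. intro h. apply Hx. rewrite E, <- Z.mul_assoc, h. ring.
      * rewrite Hd. assert (Z.abs (PP p v * u) < Z.abs x)%Z.
        { rewrite E. rewrite !Z.abs_mul. assert (0 < Z.abs (PP p v * u))%Z.
          { apply Z.abs_pos. intro h. rewrite <- Z.mul_assoc, h in E. lia. }
          rewrite !Z.abs_mul in H. rewrite (Z.abs_eq p) by lia. nia. }
        lia.
Qed.

Lemma vp_spec p x v u : (1 < p)%Z -> x = (PP p v * u)%Z -> ~ (p | u)%Z -> vp p x = v.
Proof.
  intros Hp E N. unfold vp. apply (vp_fuel_spec p Hp _ x v u); auto.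
  intro h. subst. apply N. apply Z.mul_eq_0 in h. destruct h as [h|h].
  - pose proof (PP_pos p v Hp). lia.
  - subst. apply Z.divide_0_r.
Qed.

Definition val (p x : Z) : option nat := if Z.eqb x 0 then None else Some (vp p x).

Definition pv (p : Z) (o : option nat) : R :=
  match o with None => 0%R | Some a => (/ (IZR p) ^ a)%R end.

Lemma pabs_pv p x : pabs p x = pv p (val p x).
Proof. unfold pabs, val. destruct (x =? 0)%Z; reflexivity. Qed.

Lemma val_unit p q d : (1 < p)%Z -> (0 <= q)%Z -> (0 < d < p)%Z -> val p (q * p + d) = Some 0%nat.
Proof.
  intros Hp Hq Hd. unfold val. replace (q * p + d =? 0)%Z with false by (symmetry; apply Z.eqb_neq; nia).
  f_equal. apply (vp_spec p _ 0 (q*p+d)); auto. rewrite PP_0. ring.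
  intro h. assert (h2: (p | d)%Z). { replace d with ((q*p+d) - q * p)%Z by ring. apply Z.divide_sub_r; auto. exists q; ring. }
  apply Z.divide_pos_le in h2; lia.
Qed.

Lemma val_mulp p q : (1 < p)%Z -> val p (q * p) = option_map S (val p q).
Proof.
  intros Hp. unfold val. destruct (Z.eqb_spec q 0).
  - subst. reflexivity.
  - replace (q * p =? 0)%Z with false by (symmetry; apply Z.eqb_neq; nia).
    simpl. f_equal. destruct (val_decomp p Hp q n) as [v [u [E N]]].
    rewrite (vp_spec p q v u Hp E N). apply (vp_spec p _ (S v) u Hp); auto.
    rewrite PP_S, E. ring.
Qed.

End PartB.
Import PartB.

Module PartC.
Import ListNotations.

Lemma csum_app {T} (f : T -> C) l1 l2 : csum_list f (l1 ++ l2) = (csum_list f l1 + csum_list f l2)%C.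
Proof. induction l1; simpl. ring. unfold csum_list in *. simpl. rewrite IHl1. ring. Qed.

Lemma csum_cons {T} (f : T -> C) x l : csum_list f (x :: l) = (f x + csum_list f l)%C.
Proof. reflexivity. Qed.

Lemma csum_nil {T} (f : T -> C) : csum_list f [] = RtoC 0.
Proof. reflexivity. Qed.

Lemma csum_map {T U} (f : U -> C) (g : T -> U) l : csum_list f (map g l) = csum_list (fun x => f (g x)) l.
Proof. induction l; [reflexivity|]. simpl map. rewrite !csum_cons, IHl. reflexivity. Qed.

Lemma csum_ext {T} (f g : T -> C) l : (forall x, In x l -> f x = g x) -> csum_list f l = csum_list g l.
Proof. induction l; intros H; [reflexivity|]. rewrite !csum_cons, IHl, H; [reflexivity|simpl; auto|]. intros; apply H; simpl; auto. Qed.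

Lemma csum_scal {T} (c : C) (f : T -> C) l : (c * csum_list f l)%C = csum_list (fun x => c * f x)%C l.
Proof. induction l. unfold csum_list; simpl; ring. rewrite !csum_cons, <- IHl. ring. Qed.

Lemma csum_plus {T} (f g : T -> C) l : csum_list (fun x => f x + g x)%C l = (csum_list f l + csum_list g l)%C.
Proof. induction l. unfold csum_list; simpl; ring. rewrite !csum_cons, IHl. ring. Qed.

Lemma csum_zero {T} (f : T -> C) l : (forall x, In x l -> f x = RtoC 0) -> csum_list f l = 0%C.
Proof. intros H. rewrite (csum_ext f (fun _ => 0%C)); auto. clear H. induction l; [reflexivity|]. rewrite csum_cons, IHl. ring. Qed.

Lemma csum_perm {T} (f : T -> C) l1 l2 : Permutation l1 l2 -> csum_list f l1 = csum_list f l2.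
Proof. induction 1; auto. rewrite !csum_cons, IHPermutation; auto. rewrite !csum_cons. ring. congruence. Qed.

Lemma csum_flat_map {T U} (f : U -> C) (g : T -> list U) l :
  csum_list f (flat_map g l) = csum_list (fun x => csum_list f (g x)) l.
Proof. induction l; auto. simpl flat_map. rewrite csum_app, csum_cons, IHl. reflexivity. Qed.

Lemma csum_nat_0 f : csum_nat 0 f = 0%C.
Proof. reflexivity. Qed.

Lemma csum_nat_ext n f g : (forall k, (k < n)%nat -> f k = g k) -> csum_nat n f = csum_nat n g.
Proof. intros H. unfold csum_nat. apply csum_ext. intros x Hx. apply in_seq in Hx. apply H. lia. Qed.

Lemma csum_nat_S n f : csum_nat (S n) f = (f 0%nat + csum_nat n (fun k => f (S k)))%C.
Proof. unfold csum_nat. simpl seq. rewrite csum_cons, <- seq_shift, csum_map. reflexivity. Qed.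

Lemma seq_gen s b : seq s b = map (fun k => (s + k)%nat) (seq 0 b).
Proof. revert s; induction b; intros s; simpl; auto. f_equal; [lia|].
  rewrite IHb, <- seq_shift, map_map. apply map_ext. intros; lia. Qed.

Lemma csum_nat_add a b f : csum_nat (a + b) f = (csum_nat a f + csum_nat b (fun k => f (a + k)%nat))%C.
Proof. unfold csum_nat. rewrite seq_app, csum_app. f_equal. simpl.
  rewrite seq_gen, csum_map. reflexivity. Qed.

Lemma csum_nat_Sr n f : csum_nat (S n) f = (csum_nat n f + f n)%C.
Proof. replace (S n) with (n + 1)%nat by lia. rewrite csum_nat_add. unfold csum_nat at 2. simpl seq.
  rewrite csum_cons, csum_nil. rewrite Nat.add_0_r. ring. Qed.

Lemma csum_nat_plus n f g : csum_nat n (fun k => f k + g k)%C = (csum_nat n f + csum_nat n g)%C.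
Proof. apply csum_plus. Qed.

Lemma csum_nat_scal n c f : (c * csum_nat n f)%C = csum_nat n (fun k => c * f k)%C.
Proof. apply csum_scal. Qed.

Lemma csum_nat_zero n (f : nat -> C) : (forall k, (k < n)%nat -> f k = 0%C) -> csum_nat n f = 0%C.
Proof. intros H. apply csum_zero. intros x Hx. apply in_seq in Hx. apply H; lia. Qed.

Lemma csum_nat_const n c : csum_nat n (fun _ => c) = (RtoC (INR n) * c)%C.
Proof. induction n. rewrite csum_nat_0. simpl. ring.
  rewrite csum_nat_Sr, IHn, S_INR, RtoC_plus. ring. Qed.

Lemma csum_nat_mul a b f : csum_nat (a * b) f = csum_nat a (fun q => csum_nat b (fun d => f (q * b + d)%nat)).
Proof. induction a. reflexivity.
  replace (S a * b)%nat with (a * b + b)%nat by lia. rewrite csum_nat_add, csum_nat_Sr, IHa. reflexivity. Qed.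

Lemma csum_nat_swap n m (f : nat -> nat -> C) :
  csum_nat n (fun i => csum_nat m (fun j => f i j)) = csum_nat m (fun j => csum_nat n (fun i => f i j)).
Proof. induction n. rewrite csum_nat_0. symmetry. apply csum_nat_zero. intros; apply csum_nat_0.
  rewrite csum_nat_Sr, IHn. rewrite <- csum_nat_plus. apply csum_nat_ext. intros. rewrite csum_nat_Sr. reflexivity. Qed.

Definition wt (p : Z) (n a : nat) : R := ((IZR p - 1) * IZR p ^ n / IZR p ^ (S a))%R.

Lemma count_val p (Hp : (1 < p)%Z) : forall n (F : option nat -> C),
  csum_nat (Z.to_nat (PP p n)) (fun i => F (val p (Z.of_nat i))) =
  (F None + csum_nat n (fun a => RtoC (wt p n a) * F (Some a)))%C.
Proof.
  induction n; intros F.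
  - rewrite PP_0. unfold csum_nat, csum_list; simpl. unfold val. simpl. ring_simplify. reflexivity.
  - rewrite PP_S. rewrite Z2Nat.inj_mul by (try lia; pose proof (PP_pos p n Hp); lia).
    rewrite Nat.mul_comm, csum_nat_mul.
    assert (Hpn : exists k, Z.to_nat p = S k). { exists (Z.to_nat p - 1)%nat. lia. }
    destruct Hpn as [k Hk]. rewrite Hk.
    assert (Hk' : Z.of_nat (S k) = p) by (rewrite <- Hk; rewrite Z2Nat.id; lia).
    rewrite (csum_nat_ext _ _ (fun q => F (option_map S (val p (Z.of_nat q))) + RtoC (INR k) * F (Some 0%nat))%C).
    2:{ intros q Hq. rewrite csum_nat_S. f_equal.
        - rewrite Nat.add_0_r, Nat2Z.inj_mul, Hk'. rewrite val_mulp; auto.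
        - rewrite <- csum_nat_const. apply csum_nat_ext. intros d Hd. f_equal.
          rewrite Nat2Z.inj_add, Nat2Z.inj_mul, Hk'.
          apply val_unit; lia. }
    rewrite csum_nat_plus, csum_nat_const, (IHn (fun o => F (option_map S o))).
    simpl option_map. rewrite csum_nat_S. 
    assert (E1 : csum_nat n (fun a => RtoC (wt p n a) * F (Some (S a)))%C =
                 csum_nat n (fun k0 => RtoC (wt p (S n) (S k0)) * F (Some (S k0)))%C).
    { apply csum_nat_ext. intros. f_equal. f_equal. unfold wt. simpl.
      assert (IZR p <> 0)%R by (apply not_0_IZR; lia). pose proof (pow_nonzero (IZR p) n H0).
      pose proof (pow_nonzero (IZR p) k0 H0). field; auto. }
    rewrite E1.
    assert (E2 : (INR (Z.to_nat (PP p n)) * INR k)%R = wt p (S n) 0).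
    { unfold wt. rewrite INR_IZR_INZ, Z2Nat.id by (pose proof (PP_pos p n Hp); lia).
      unfold PP. rewrite <- pow_IZR.
      assert (INR k = IZR p - 1)%R. { rewrite INR_IZR_INZ. replace (Z.of_nat k) with (p - 1)%Z by lia.
        rewrite minus_IZR. reflexivity. }
      rewrite H. simpl. assert (IZR p <> 0)%R by (apply not_0_IZR; lia). field; auto. }
    rewrite <- E2, RtoC_mult. ring.
Qed.

End PartC.
Import PartC.

Module PartD.
Import ListNotations.
Local Open Scope R_scope.

Lemma cexp_add z w : cexp (z + w)%C = (cexp z * cexp w)%C.
Proof.
  unfold cexp. destruct z as [a b], w as [c d]. simpl.
  rewrite exp_plus, cos_plus, sin_plus.
  apply injective_projections; simpl; ring.
Qed.

Lemma cexp_R r : cexp (RtoC r) = RtoC (exp r).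
Proof. unfold cexp. simpl. rewrite cos_0, sin_0. unfold RtoC. f_equal; ring. Qed.

Lemma Cmod_cexp z : Cmod (cexp z) = exp (Re z).
Proof.
  destruct z as [a b]. unfold cexp, Cmod. simpl.
  pose proof (sin2_cos2 b) as H. unfold Rsqr in H. pose proof (exp_pos a).
  apply sqrt_lem_1; try nra.
Qed.

Lemma rpowC_pos r s : 0 < r -> rpowC r s = cexp (RtoC (ln r) * s)%C.
Proof. intros H. unfold rpowC. destruct (Rle_dec r 0); [lra|reflexivity]. Qed.

Lemma rpowC_0 s : rpowC 0 s = RtoC 0.
Proof. unfold rpowC. destruct (Rle_dec 0 0); [reflexivity|lra]. Qed.

Lemma rpowC_neg r s : r <= 0 -> rpowC r s = RtoC 0.
Proof. intros H. unfold rpowC. destruct (Rle_dec r 0); [reflexivity|lra]. Qed.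

Section P.
Variable p : Z.
Hypothesis Hp : (1 < p)%Z.

Lemma IZRp_gt1 : 1 < IZR p.
Proof. apply IZR_lt. lia. Qed.

Lemma IZRp_pos : 0 < IZR p.
Proof. pose proof IZRp_gt1. lra. Qed.

Lemma powp_pos n : 0 < IZR p ^ n.
Proof. apply pow_lt, IZRp_pos. Qed.

Lemma invpow_le a b : (b <= a)%nat -> / IZR p ^ a <= / IZR p ^ b.
Proof.
  intros h. apply Rinv_le_contravar. apply powp_pos. apply Rle_pow; auto. pose proof IZRp_gt1; lra.
Qed.

Lemma invpow_le_inv a b : / IZR p ^ a <= / IZR p ^ b -> (b <= a)%nat.
Proof.
  intros h. destruct (le_lt_dec b a); auto. exfalso.
  assert (/ IZR p ^ b < / IZR p ^ a). { apply Rinv_lt_contravar. apply Rmult_lt_0_compat; apply powp_pos.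
    apply Rlt_pow; auto. apply IZRp_gt1. }
  lra.
Qed.

Lemma ln_invpow a : ln (/ IZR p ^ a) = - (INR a * ln (IZR p)).
Proof. rewrite ln_Rinv by apply powp_pos. rewrite ln_pow by apply IZRp_pos. reflexivity. Qed.

Lemma IZR_PP k : IZR (PP p k) = IZR p ^ k.
Proof. unfold PP. rewrite pow_IZR. reflexivity. Qed.

Lemma ln_PP k : ln (IZR (PP p k)) = INR k * ln (IZR p).
Proof. rewrite IZR_PP, ln_pow by apply IZRp_pos. reflexivity. Qed.

Definition mfun (i j : nat) (ob : option nat) : nat :=
  match ob with None => Nat.min i j | Some b => Nat.min (Nat.min i j) b end.

Definition Tt (s1 s2 : C) (i j : nat) (ob : option nat) : C :=
  (rpowC (IZR (PP p (i + j - mfun i j ob))) (- s1) * rpowC (IZR (PP p (mfun i j ob))) (- s2))%C.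

Definition Hf (s1 s2 : C) (oa ob oc : option nat) : C :=
  if Rle_dec (pv p oc ^ 2) (pv p oa) then
    Cmult (Cmult (rpowC (pv p oa) (Cminus s1 (RtoC 2)))
                 (rpowC (pv p oc) (Cminus s1 (RtoC 1))))
          (rpowC (Rmax (pv p oa) (Rmax (pv p ob) (pv p oc))) (Cminus s2 s1))
  else RtoC 0.

Lemma integrand_Hf s1 s2 x y z : integrand p s1 s2 x y z = Hf s1 s2 (val p x) (val p y) (val p z).
Proof. unfold integrand, Hf. rewrite !pabs_pv. reflexivity. Qed.

Lemma Hf_None_c s1 s2 oa ob : Hf s1 s2 oa ob None = RtoC 0.
Proof. unfold Hf. simpl pv at 2. destruct Rle_dec; auto. rewrite rpowC_0. ring. Qed.

Lemma Hf_None_a s1 s2 ob c : Hf s1 s2 None ob (Some c) = RtoC 0.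
Proof. unfold Hf. destruct Rle_dec; auto. exfalso. simpl in r.
  pose proof (powp_pos c). assert (0 < / IZR p ^ c) by (apply Rinv_0_lt_compat; auto). nra. Qed.

Lemma Hf_bad s1 s2 a ob c : (2 * c < a)%nat -> Hf s1 s2 (Some a) ob (Some c) = RtoC 0.
Proof. intros h. unfold Hf. destruct Rle_dec; auto. exfalso. simpl in r.
  rewrite Rmult_1_r, <- Rinv_mult, <- pow_add in r. apply invpow_le_inv in r. lia. Qed.

Lemma Rmax_inv x y : Rmax (/ IZR p ^ x) (/ IZR p ^ y) = / IZR p ^ (Nat.min x y).
Proof. destruct (le_lt_dec x y).
  - rewrite Rmax_left by (apply invpow_le; auto). rewrite Nat.min_l by lia. auto.
  - rewrite Rmax_right by (apply invpow_le; lia). rewrite Nat.min_r by lia. auto. Qed.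

Lemma Rmax_pv a ob c : Rmax (/ IZR p ^ a) (Rmax (pv p ob) (/ IZR p ^ c)) = / IZR p ^ (mfun a c ob).
Proof.
  unfold mfun. destruct ob as [b|]; simpl pv.
  - rewrite !Rmax_inv. f_equal. f_equal. lia.
  - rewrite (Rmax_right 0) by (left; apply Rinv_0_lt_compat, powp_pos). rewrite Rmax_inv. reflexivity.
Qed.

Lemma mfun_le i j ob : (mfun i j ob <= i)%nat /\ (mfun i j ob <= j)%nat.
Proof. unfold mfun; destruct ob; lia. Qed.

Lemma Hf_good s1 s2 a ob c : (a <= 2 * c)%nat ->
  Hf s1 s2 (Some a) ob (Some c) = (RtoC (IZR p ^ (2 * a + c)) * Tt s1 s2 a c ob)%C.
Proof.
  intros h. unfold Hf. destruct Rle_dec as [r|r].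
  2:{ exfalso. apply r. simpl. rewrite Rmult_1_r, <- Rinv_mult, <- pow_add. apply invpow_le. lia. }
  simpl pv. rewrite Rmax_pv. unfold Tt.
  pose proof (mfun_le a c ob) as [m1 m2]. set (m := mfun a c ob) in *.
  assert (Hpos : forall k, 0 < / IZR p ^ k) by (intros; apply Rinv_0_lt_compat, powp_pos).
  assert (Hpos2 : forall k, 0 < IZR (PP p k)) by (intros; rewrite IZR_PP; apply powp_pos).
  rewrite !rpowC_pos by auto. rewrite !ln_invpow, !ln_PP.
  rewrite <- (exp_ln (IZR p ^ (2 * a + c))) by apply powp_pos.
  rewrite <- cexp_R, <- !cexp_add. f_equal.
  rewrite ln_pow by apply IZRp_pos.
  rewrite minus_INR by lia. rewrite plus_INR, !mult_INR, plus_INR. replace (INR 2) with 2 by (simpl; lra).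
  repeat first [rewrite RtoC_opp | rewrite RtoC_mult | rewrite RtoC_minus | rewrite RtoC_plus]. ring.
Qed.

Lemma Tt_None s1 s2 a c b : (a <= b)%nat -> Tt s1 s2 a c (Some b) = Tt s1 s2 a c None.
Proof. intros h. unfold Tt, mfun. replace (Nat.min (Nat.min a c) b) with (Nat.min a c) by lia. reflexivity. Qed.

End P.

End PartD.
Import PartD.

Module PartE.
Import ListNotations.
Local Open Scope R_scope.

Definition rsum_list {T : Type} (f : T -> R) (l : list T) : R :=
  fold_right (fun t acc => f t + acc) 0 l.
Definition rsum_nat (n : nat) (f : nat -> R) : R := rsum_list f (seq 0 n).

Lemma rsum_cons {T} (f : T -> R) x l : rsum_list f (x :: l) = f x + rsum_list f l.
Proof. reflexivity. Qed.

Lemma rsum_map {T U} (f : U -> R) (g : T -> U) l : rsum_list f (map g l) = rsum_list (fun x => f (g x)) l.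
Proof. induction l; [reflexivity|]. simpl map. rewrite !rsum_cons, IHl. reflexivity. Qed.

Lemma rsum_ext {T} (f g : T -> R) l : (forall x, In x l -> f x = g x) -> rsum_list f l = rsum_list g l.
Proof. induction l; intros H; [reflexivity|]. rewrite !rsum_cons, IHl, H; [reflexivity|simpl; auto|]. intros; apply H; simpl; auto. Qed.

Lemma rsum_le {T} (f g : T -> R) l : (forall x, In x l -> f x <= g x) -> rsum_list f l <= rsum_list g l.
Proof. induction l; intros H. simpl; lra. rewrite !rsum_cons. apply Rplus_le_compat. apply H; simpl; auto. apply IHl. intros; apply H; simpl; auto. Qed.

Lemma rsum_nonneg {T} (f : T -> R) l : (forall x, In x l -> 0 <= f x) -> 0 <= rsum_list f l.
Proof. intros H. replace 0 with (rsum_list (fun _ : T => 0) l). apply rsum_le; auto.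
  clear. induction l; auto. rewrite rsum_cons, IHl. ring. Qed.

Lemma rsum_app {T} (f : T -> R) l1 l2 : rsum_list f (l1 ++ l2) = rsum_list f l1 + rsum_list f l2.
Proof. induction l1. simpl. ring. simpl app. rewrite !rsum_cons, IHl1. ring. Qed.

Lemma rsum_flat_map {T U} (f : U -> R) (g : T -> list U) l :
  rsum_list f (flat_map g l) = rsum_list (fun x => rsum_list f (g x)) l.
Proof. induction l; auto. simpl flat_map. rewrite rsum_app, rsum_cons, IHl. reflexivity. Qed.

Lemma rsum_scal {T} c (f : T -> R) l : c * rsum_list f l = rsum_list (fun x => c * f x) l.
Proof. induction l. simpl; ring. rewrite !rsum_cons, <- IHl. ring. Qed.

Lemma rsum_nat_S n f : rsum_nat (S n) f = f 0%nat + rsum_nat n (fun k => f (S k)).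
Proof. unfold rsum_nat. simpl seq. rewrite rsum_cons, <- seq_shift, rsum_map. reflexivity. Qed.

Lemma rsum_nat_ext n f g : (forall k, (k < n)%nat -> f k = g k) -> rsum_nat n f = rsum_nat n g.
Proof. intros H. unfold rsum_nat. apply rsum_ext. intros x Hx. apply in_seq in Hx. apply H. lia. Qed.

Lemma rsum_nat_le n f g : (forall k, (k < n)%nat -> f k <= g k) -> rsum_nat n f <= rsum_nat n g.
Proof. intros H. unfold rsum_nat. apply rsum_le. intros x Hx. apply in_seq in Hx. apply H. lia. Qed.

Lemma rsum_nat_const n c : rsum_nat n (fun _ => c) = INR n * c.
Proof. induction n. simpl. unfold rsum_nat; simpl; ring. rewrite rsum_nat_S, IHn, S_INR. ring. Qed.

Lemma RtoC_rsum n f : RtoC (rsum_nat n f) = csum_nat n (fun k => RtoC (f k)).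
Proof. unfold rsum_nat, csum_nat. generalize (seq 0 n). induction l. reflexivity.
  rewrite rsum_cons, csum_cons, RtoC_plus, IHl. reflexivity. Qed.

Lemma Cmod_csum {T} (f : T -> C) l : Cmod (csum_list f l) <= rsum_list (fun x => Cmod (f x)) l.
Proof. induction l. unfold csum_list; simpl. rewrite Cmod_0. lra.
  rewrite csum_cons, rsum_cons. eapply Rle_trans. apply Cmod_triangle. lra. Qed.

Section P.
Variable p : Z.
Hypothesis Hp : (1 < p)%Z.

Definition Sv (n : nat) (F : option nat -> C) : C :=
  (F None + csum_nat n (fun a => RtoC (wt p n a) * F (Some a)))%C.

Lemma Sv_ext n F G : (forall o, F o = G o) -> Sv n F = Sv n G.
Proof. intros H. unfold Sv. rewrite H. f_equal. apply csum_nat_ext. intros. rewrite H. reflexivity. Qed.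

Lemma Sv_zero n F : (forall o, F o = RtoC 0) -> Sv n F = RtoC 0.
Proof. intros H. unfold Sv. rewrite H, csum_nat_zero. ring. intros. rewrite H. ring. Qed.

Lemma Sv_scal n k F : Sv n (fun o => k * F o)%C = (k * Sv n F)%C.
Proof. unfold Sv. rewrite Cmult_plus_distr_l, csum_nat_scal. f_equal. apply csum_nat_ext. intros. ring. Qed.

Lemma Sv_sum n m (F : nat -> option nat -> C) : Sv n (fun o => csum_nat m (fun c => F c o)) = csum_nat m (fun c => Sv n (F c)).
Proof. unfold Sv. rewrite csum_nat_plus. f_equal.
  rewrite (csum_nat_ext n _ (fun a => csum_nat m (fun c => RtoC (wt p n a) * F c (Some a))%C)).
  apply csum_nat_swap. intros. apply csum_nat_scal. Qed.

Lemma triple_count n (Phi : option nat -> option nat -> option nat -> C) :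
  let N := Z.to_nat (PP p n) in
  csum_nat N (fun i => csum_nat N (fun j => csum_nat N (fun k =>
     Phi (val p (Z.of_nat i)) (val p (Z.of_nat j)) (val p (Z.of_nat k))))) =
  Sv n (fun oa => Sv n (fun ob => Sv n (fun oc => Phi oa ob oc))).
Proof.
  simpl. rewrite (csum_nat_ext _ _ (fun i => Sv n (fun ob => Sv n (fun oc => Phi (val p (Z.of_nat i)) ob oc)))).
  exact (count_val p Hp n (fun oa => Sv n (fun ob => Sv n (fun oc => Phi oa ob oc)))).
  intros i _. rewrite (csum_nat_ext _ _ (fun j => Sv n (fun oc => Phi (val p (Z.of_nat i)) (val p (Z.of_nat j)) oc))).
  exact (count_val p Hp n (fun ob => Sv n (fun oc => Phi (val p (Z.of_nat i)) ob oc))).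
  intros j _. exact (count_val p Hp n (fun oc => Phi (val p (Z.of_nat i)) (val p (Z.of_nat j)) oc)).
Qed.

Lemma geom_wt d a : rsum_nat d (fun k => wt p (a + d) (a + k)) = IZR p ^ d - 1.
Proof.
  revert a. induction d; intros a. unfold rsum_nat; simpl; ring.
  rewrite rsum_nat_S. rewrite (rsum_nat_ext d _ (fun k => wt p (S a + d) (S a + k))).
  2:{ intros. f_equal; lia. }
  rewrite IHd. unfold wt. replace (a + S d)%nat with (S a + d)%nat by lia.
  rewrite Nat.add_0_r. rewrite !pow_add. simpl.
  pose proof (powp_pos p Hp a). pose proof (IZRp_pos p Hp). field. lra.
Qed.

Lemma Sv_collapse n a F : (a <= n)%nat -> (forall b, (a <= b)%nat -> F (Some b) = F None) ->
  Sv n F = (RtoC (IZR p ^ n / IZR p ^ a) * Sv a F)%C.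
Proof.
  intros han HF. unfold Sv. replace n with (a + (n - a))%nat at 1 by lia.
  rewrite csum_nat_add.
  rewrite (csum_nat_ext (n - a) _ (fun k => RtoC (wt p n (a + k)) * F None)%C).
  2:{ intros. rewrite HF by lia. reflexivity. }
  assert (E : csum_nat (n - a) (fun k => (RtoC (wt p n (a + k)) * F None)%C) =
              (csum_nat (n - a) (fun k => RtoC (wt p n (a + k))) * F None)%C).
  { rewrite Cmult_comm, csum_nat_scal. apply csum_nat_ext. intros; ring. }
  rewrite E, <- RtoC_rsum.
  assert (G : rsum_nat (n - a) (fun k => wt p n (a + k)) = IZR p ^ (n - a) - 1).
  { pose proof (geom_wt (n - a) a) as G. replace (a + (n - a))%nat with n in G by lia. exact G. }
  rewrite G.
  rewrite Cmult_plus_distr_l, csum_nat_scal.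
  rewrite (csum_nat_ext a (fun k => RtoC (wt p n k) * F (Some k))%C (fun k => RtoC (IZR p ^ n / IZR p ^ a) * (RtoC (wt p a k) * F (Some k)))%C).
  2:{ intros. rewrite Cmult_assoc, <- RtoC_mult. f_equal. f_equal. unfold wt.
      pose proof (powp_pos p Hp a). pose proof (IZRp_pos p Hp). pose proof (powp_pos p Hp (S k)). field. lra. }
  assert (E2 : IZR p ^ (n - a) = IZR p ^ n / IZR p ^ a).
  { replace n with (a + (n - a))%nat at 2 by lia. rewrite pow_add. pose proof (powp_pos p Hp a). field. lra. }
  rewrite E2. rewrite RtoC_minus. ring.
Qed.

Definition Zn (s1 s2 : C) (n : nat) : C :=
  csum_nat n (fun i => csum_nat n (fun j =>
    if (i <=? 2 * j)%nat then csum_nat (Z.to_nat (PP p i)) (fun r => Tt p s1 s2 i j (val p (Z.of_nat r)))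
    else RtoC 0)).

Lemma Riemann_Zn s1 s2 n : RiemannSum p s1 s2 n = (RtoC ((1 - / IZR p) ^ 2) * Zn s1 s2 n)%C.
Proof.
  unfold RiemannSum.
  set (N := Z.to_nat (p ^ Z.of_nat n)).
  rewrite (csum_nat_ext N _ (fun i => csum_nat N (fun j => csum_nat N (fun k =>
     Hf p s1 s2 (val p (Z.of_nat i)) (val p (Z.of_nat j)) (val p (Z.of_nat k)))))).
  2:{ intros. apply csum_nat_ext. intros. apply csum_nat_ext. intros. apply integrand_Hf. }
  unfold N. fold (PP p n). rewrite triple_count.
  unfold Sv at 1. rewrite Sv_zero.
  2:{ intros ob. apply Sv_zero. intros [c|]. apply Hf_None_a; auto. apply Hf_None_c; auto. }
  unfold Zn. rewrite Cplus_0_l, csum_nat_scal, csum_nat_scal. apply csum_nat_ext. intros a Ha.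
  rewrite (Sv_ext n _ (fun ob => csum_nat n (fun c => RtoC (wt p n c) * Hf p s1 s2 (Some a) ob (Some c))%C)).
  2:{ intros ob. unfold Sv. rewrite Hf_None_c. ring. }
  rewrite Sv_sum. rewrite (csum_nat_scal n (RtoC (wt p n a))), (csum_nat_scal n (RtoC (/ IZR p ^ (3*n)))), (csum_nat_scal n (RtoC ((1 - / IZR p)^2))). apply csum_nat_ext. intros c Hc.
  rewrite Sv_scal.
  destruct (Nat.leb_spec a (2 * c)).
  - rewrite (Sv_ext n _ (fun ob => RtoC (IZR p ^ (2 * a + c)) * Tt p s1 s2 a c ob)%C).
    2:{ intros. apply Hf_good; auto. }
    rewrite Sv_scal. rewrite (Sv_collapse n a) by (try lia; intros; apply Tt_None; auto).
    rewrite (count_val p Hp a (fun ob => Tt p s1 s2 a c ob)). fold (Sv a (Tt p s1 s2 a c)).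
    rewrite !Cmult_assoc, <- !RtoC_mult. f_equal. f_equal.
    unfold wt. pose proof (IZRp_pos p Hp).
    replace (3 * n)%nat with (n + n + n)%nat by lia. replace (2 * a + c)%nat with (a + a + c)%nat by lia.
    rewrite !pow_add. simpl.
    pose proof (powp_pos p Hp a). pose proof (powp_pos p Hp c). pose proof (powp_pos p Hp n).
    field. repeat split; lra.
  - rewrite Sv_zero. ring. intros; apply Hf_bad; lia.
Qed.

End P.

End PartE.
Import PartE.

Module PartG.
Import ListNotations.
Local Open Scope Z_scope.

Lemma U1 S a1 a2 a3 : IsCotype S a1 a2 a3 -> forall n,
  (forall x y z, S (n * x) (n * y) (n * z)) <-> (a1 | n).
Proof.
  intros [H3 [H32 [H21 [m11 [m12 [m13 [m21 [m22 [m23 [m31 [m32 [m33 [Hk Hs]]]]]]]]]]]]].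
  cbv zeta in *. intros n. split.
  - intros H. destruct (Hs 1 0 0) as [a [b [c [D1 [D2 D3]]]]].
    destruct (Hk (n*a) (n*b) (n*c)) as [Hk1 _]. destruct (Hk1 (H a b c)) as [E1 _].
    replace n with (n * (m11 * a + m12 * b + m13 * c) - n * (m11 * a + m12 * b + m13 * c - 1)) by ring.
    apply Z.divide_sub_r. replace (n * (m11 * a + m12 * b + m13 * c)) with (m11 * (n * a) + m12 * (n * b) + m13 * (n * c)) by ring. auto.
    apply Z.divide_mul_r. auto.
  - intros Hd x y z. apply Hk. assert (Hd2 : (a2 | n)) by (eapply Z.divide_trans; eauto).
    assert (Hd3 : (a3 | n)) by (eapply Z.divide_trans; eauto).
    repeat split.
    + replace (m11 * (n * x) + m12 * (n * y) + m13 * (n * z)) with (n * (m11 * x + m12 * y + m13 * z)) by ring. apply Z.divide_mul_l; auto.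
    + replace (m21 * (n * x) + m22 * (n * y) + m23 * (n * z)) with (n * (m21 * x + m22 * y + m23 * z)) by ring. apply Z.divide_mul_l; auto.
    + replace (m31 * (n * x) + m32 * (n * y) + m33 * (n * z)) with (n * (m31 * x + m32 * y + m33 * z)) by ring. apply Z.divide_mul_l; auto.
Qed.

Definition Pc (S : subsetR) (n : Z) : Prop :=
  exists w1 w2 w3, forall x y z, exists k, S (n * x - k * w1) (n * y - k * w2) (n * z - k * w3).

Lemma U2 p K S a1 a2 a3 : prime p -> IsCotype S a1 a2 a3 -> 0 < a2 -> (a2 | PP p K) ->
  forall n, Pc S n <-> (a2 | n).
Proof.
  intros Hp [H3 [H32 [H21 [m11 [m12 [m13 [m21 [m22 [m23 [m31 [m32 [m33 [Hk Hs]]]]]]]]]]]]] Ha2 Hdiv.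
  cbv zeta in *. intros n. split.
  - intros [w1 [w2 [w3 Hw]]].
    destruct (pp_divisor p a2 K Hp Ha2 Hdiv) as [e He].
    destruct (Hs 1 0 0) as [a [b [c [D1 [D2 D3]]]]].
    destruct (Hs 0 1 0) as [a' [b' [c' [D1' [D2' D3']]]]].
    destruct (Hw a b c) as [k1 Hw1]. destruct (Hw a' b' c') as [k2 Hw2].
    apply Hk in Hw1. apply Hk in Hw2. destruct Hw1 as [F1 [F2 _]]. destruct Hw2 as [G1 [G2 _]].
    set (g1 := m11 * w1 + m12 * w2 + m13 * w3) in *.
    set (g2 := m21 * w1 + m22 * w2 + m23 * w3) in *.
    assert (X1 : (a2 | n - k1 * g1)).
    { apply (Z.divide_trans _ a1); auto.
      replace (n - k1 * g1) with ((m11 * (n * a - k1 * w1) + m12 * (n * b - k1 * w2) + m13 * (n * c - k1 * w3)) - n * (m11 * a + m12 * b + m13 * c - 0 - 1)) by (unfold g1; ring).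
      apply Z.divide_sub_r; auto. apply Z.divide_mul_r. rewrite Z.sub_0_r. auto. }
    assert (X2 : (a2 | k1 * g2)).
    { replace (k1 * g2) with (n * (m21 * a + m22 * b + m23 * c - 0) - (m21 * (n * a - k1 * w1) + m22 * (n * b - k1 * w2) + m23 * (n * c - k1 * w3))) by (unfold g2; ring).
      apply Z.divide_sub_r; auto. apply Z.divide_mul_r; auto. }
    assert (X3 : (a2 | k2 * g1)).
    { apply (Z.divide_trans _ a1); auto.
      replace (k2 * g1) with (n * (m11 * a' + m12 * b' + m13 * c' - 0) - (m11 * (n * a' - k2 * w1) + m12 * (n * b' - k2 * w2) + m13 * (n * c' - k2 * w3))) by (unfold g1; ring).
      apply Z.divide_sub_r; auto. apply Z.divide_mul_r; auto. }
    assert (X4 : (a2 | n - k2 * g2)).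
    { replace (n - k2 * g2) with ((m21 * (n * a' - k2 * w1) + m22 * (n * b' - k2 * w2) + m23 * (n * c' - k2 * w3)) - n * (m21 * a' + m22 * b' + m23 * c' - 1)) by (unfold g2; ring).
      apply Z.divide_sub_r; auto. apply Z.divide_mul_r. auto. }
    destruct X1 as [s Hs1]. destruct X4 as [t Ht]. destruct X2 as [u Hu]. destruct X3 as [w Hw'].
    rewrite He. apply (pp_sq p Hp e n (s + t)). rewrite <- He.
    exists (u * w - s * t).
    replace (n * (n - a2 * (s + t))) with ((n - s * a2) * (n - t * a2) - s * t * (a2 * a2)) by ring.
    replace (n - s * a2) with (k1 * g1) by lia. replace (n - t * a2) with (k2 * g2) by lia.
    replace (k1 * g1 * (k2 * g2)) with ((k1 * g2) * (k2 * g1)) by ring.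
    rewrite Hu, Hw'. ring.
  - intros Hd. destruct (Hs 1 0 0) as [a [b [c [D1 [D2 D3]]]]].
    exists a, b, c. intros x y z. exists (n * (m11 * x + m12 * y + m13 * z)).
    apply Hk. assert (Hd3 : (a3 | n)) by exact (Z.divide_trans _ _ _ H32 Hd).
    repeat split.
    + replace (m11 * (n * x - n * (m11 * x + m12 * y + m13 * z) * a) + m12 * (n * y - n * (m11 * x + m12 * y + m13 * z) * b) + m13 * (n * z - n * (m11 * x + m12 * y + m13 * z) * c))
        with (- (n * (m11 * x + m12 * y + m13 * z)) * (m11 * a + m12 * b + m13 * c - 1)) by ring.
      apply Z.divide_mul_r; auto.
    + replace (m21 * (n * x - n * (m11 * x + m12 * y + m13 * z) * a) + m22 * (n * y - n * (m11 * x + m12 * y + m13 * z) * b) + m23 * (n * z - n * (m11 * x + m12 * y + m13 * z) * c))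
        with (n * (m21 * x + m22 * y + m23 * z) - n * (m11 * x + m12 * y + m13 * z) * (m21 * a + m22 * b + m23 * c - 0)) by ring.
      apply Z.divide_sub_r; apply Z.divide_mul_l; auto. apply Z.divide_mul_l; auto.
    + replace (m31 * (n * x - n * (m11 * x + m12 * y + m13 * z) * a) + m32 * (n * y - n * (m11 * x + m12 * y + m13 * z) * b) + m33 * (n * z - n * (m11 * x + m12 * y + m13 * z) * c))
        with (n * (m31 * x + m32 * y + m33 * z) - n * (m11 * x + m12 * y + m13 * z) * (m31 * a + m32 * b + m33 * c - 0)) by ring.
      apply Z.divide_sub_r; apply Z.divide_mul_l; auto. apply Z.divide_mul_l; auto.
Qed.

Definition det3 (a b c d e f g h i : Z) : Z := a * (e * i - f * h) - b * (d * i - f * g) + c * (d * h - e * g).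

Lemma det_one a e11 e12 e13 e21 e22 e23 e31 e32 e33 :
  (a | det3 (1 + a * e11) (0 + a * e12) (0 + a * e13) (0 + a * e21) (1 + a * e22) (0 + a * e23) (0 + a * e31) (0 + a * e32) (1 + a * e33) - 1).
Proof.
  exists ((e11 + e22 + e33) + a * (e11 * e22 - e12 * e21 + e11 * e33 - e13 * e31 + e22 * e33 - e23 * e32)
          + a * a * det3 e11 e12 e13 e21 e22 e23 e31 e32 e33).
  unfold det3. ring.
Qed.

Lemma U3 S a1 a2 a3 : IsCotype S a1 a2 a3 -> S 0 0 1 -> (a3 | 1).
Proof.
  intros [H3 [H32 [H21 [m11 [m12 [m13 [m21 [m22 [m23 [m31 [m32 [m33 [Hk Hs]]]]]]]]]]]]] H001.
  cbv zeta in *.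
  assert (H31 : (a3 | a1)) by exact (Z.divide_trans _ _ _ H32 H21).
  apply Hk in H001. destruct H001 as [C1 [C2 C3]].
  replace (m11 * 0 + m12 * 0 + m13 * 1) with m13 in C1 by ring.
  replace (m21 * 0 + m22 * 0 + m23 * 1) with m23 in C2 by ring.
  replace (m31 * 0 + m32 * 0 + m33 * 1) with m33 in C3 by ring.
  assert (c1 : (a3 | m13)) by exact (Z.divide_trans _ _ _ H31 C1).
  assert (c2 : (a3 | m23)) by exact (Z.divide_trans _ _ _ H32 C2).
  destruct c1 as [q1 Q1]. destruct c2 as [q2 Q2]. destruct C3 as [q3 Q3].
  destruct (Hs 1 0 0) as [v11 [v21 [v31 [D11 [D21 D31]]]]].
  destruct (Hs 0 1 0) as [v12 [v22 [v32 [D12 [D22 D32]]]]].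
  destruct (Hs 0 0 1) as [v13 [v23 [v33 [D13 [D23 D33]]]]].
  assert (E11 : (a3 | m11 * v11 + m12 * v21 + m13 * v31 - 1)) by exact (Z.divide_trans _ _ _ H31 D11).
  assert (E12 : (a3 | m11 * v12 + m12 * v22 + m13 * v32 - 0)) by exact (Z.divide_trans _ _ _ H31 D12).
  assert (E13 : (a3 | m11 * v13 + m12 * v23 + m13 * v33 - 0)) by exact (Z.divide_trans _ _ _ H31 D13).
  assert (E21 : (a3 | m21 * v11 + m22 * v21 + m23 * v31 - 0)) by exact (Z.divide_trans _ _ _ H32 D21).
  assert (E22 : (a3 | m21 * v12 + m22 * v22 + m23 * v32 - 1)) by exact (Z.divide_trans _ _ _ H32 D22).
  assert (E23 : (a3 | m21 * v13 + m22 * v23 + m23 * v33 - 0)) by exact (Z.divide_trans _ _ _ H32 D23).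
  destruct E11 as [e11 F11]. destruct E12 as [e12 F12]. destruct E13 as [e13 F13].
  destruct E21 as [e21 F21]. destruct E22 as [e22 F22]. destruct E23 as [e23 F23].
  destruct D31 as [e31 F31]. destruct D32 as [e32 F32]. destruct D33 as [e33 F33].
  pose proof (det_one a3 e11 e12 e13 e21 e22 e23 e31 e32 e33) as Hd.
  assert (Hprod : det3 (1 + a3 * e11) (0 + a3 * e12) (0 + a3 * e13) (0 + a3 * e21) (1 + a3 * e22) (0 + a3 * e23) (0 + a3 * e31) (0 + a3 * e32) (1 + a3 * e33)
    = det3 m11 m12 m13 m21 m22 m23 m31 m32 m33 * det3 v11 v12 v13 v21 v22 v23 v31 v32 v33).
  { replace (1 + a3 * e11) with (m11 * v11 + m12 * v21 + m13 * v31) by lia.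
    replace (0 + a3 * e12) with (m11 * v12 + m12 * v22 + m13 * v32) by lia.
    replace (0 + a3 * e13) with (m11 * v13 + m12 * v23 + m13 * v33) by lia.
    replace (0 + a3 * e21) with (m21 * v11 + m22 * v21 + m23 * v31) by lia.
    replace (1 + a3 * e22) with (m21 * v12 + m22 * v22 + m23 * v32) by lia.
    replace (0 + a3 * e23) with (m21 * v13 + m22 * v23 + m23 * v33) by lia.
    replace (0 + a3 * e31) with (m31 * v11 + m32 * v21 + m33 * v31) by lia.
    replace (0 + a3 * e32) with (m31 * v12 + m32 * v22 + m33 * v32) by lia.
    replace (1 + a3 * e33) with (m31 * v13 + m32 * v23 + m33 * v33) by lia.
    unfold det3. ring. }
  rewrite Hprod in Hd.
  assert (Hm : (a3 | det3 m11 m12 m13 m21 m22 m23 m31 m32 m33)).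
  { rewrite Q1, Q2, Q3. unfold det3.
    exists (m21 * m32 * q1 - m22 * m31 * q1 - m11 * m32 * q2 + m12 * m31 * q2 + m11 * m22 * q3 - m12 * m21 * q3). ring. }
  replace 1 with (det3 m11 m12 m13 m21 m22 m23 m31 m32 m33 * det3 v11 v12 v13 v21 v22 v23 v31 v32 v33
                   - (det3 m11 m12 m13 m21 m22 m23 m31 m32 m33 * det3 v11 v12 v13 v21 v22 v23 v31 v32 v33 - 1)) by ring.
  apply Z.divide_sub_r; auto. apply Z.divide_mul_l; auto.
Qed.

End PartG.
Import PartG.

Module PartH.
Import ListNotations.
Local Open Scope Z_scope.

Lemma least_exists (P : nat -> Prop) : (exists n, P n) -> exists n, P n /\ forall m, (m < n)%nat -> ~ P m.
Proof.
  intros [n Hn]. revert Hn. induction n as [n IH] using lt_wf_ind. intros Hn.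
  destruct (classic (exists m, (m < n)%nat /\ P m)) as [[m [Hm Pm]]|Hno].
  - apply (IH m Hm Pm).
  - exists n. split; auto. intros m Hm Pm. apply Hno. eauto.
Qed.

Lemma grp_scal (Q : Z -> Prop) : Q 0 -> (forall a b, Q a -> Q b -> Q (a + b)) -> (forall a, Q a -> Q (- a)) ->
  forall n a, Q a -> Q (n * a).
Proof.
  intros H0 Hadd Hneg.
  assert (Hnat : forall m a, Q a -> Q (Z.of_nat m * a)).
  { induction m; intros a Ha. simpl. auto. rewrite Nat2Z.inj_succ. replace (Z.succ (Z.of_nat m) * a) with (Z.of_nat m * a + a) by ring. auto. }
  intros n a Ha. destruct (Z_le_gt_dec 0 n).
  - replace n with (Z.of_nat (Z.to_nat n)) by lia. auto.
  - replace (n * a) with (- (Z.of_nat (Z.to_nat (- n)) * a)) by lia. auto.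
Qed.

Lemma subgroup_pp p K (Q : Z -> Prop) : prime p -> Q 0 -> (forall a b, Q a -> Q b -> Q (a + b)) -> (forall a, Q a -> Q (- a)) ->
  Q (PP p K) -> exists i, forall x, Q x <-> (PP p i | x).
Proof.
  intros Hp H0 Hadd Hneg HK. pose proof (prime_gt1 p Hp) as Hp1.
  pose proof (grp_scal Q H0 Hadd Hneg) as Hsc.
  destruct (least_exists (fun i => Q (PP p i))) as [i [Hi Hmin]]. eauto.
  exists i. intros x. split.
  - intros Hx. destruct (Z.gcd_bezout x (PP p i) _ eq_refl) as [u [v Huv]].
    assert (Qg : Q (Z.gcd x (PP p i))). { rewrite <- Huv. apply Hadd; apply Hsc; auto. }
    assert (gpos : 0 < Z.gcd x (PP p i)).
    { pose proof (Z.gcd_nonneg x (PP p i)). destruct (Z.eq_dec (Z.gcd x (PP p i)) 0) as [h|h]; [|lia].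
      apply Z.gcd_eq_0 in h. pose proof (PP_pos p i Hp1). lia. }
    destruct (pp_divisor p _ i Hp gpos (Z.gcd_divide_r x (PP p i))) as [e He].
    assert (hei : (i <= e)%nat). { destruct (le_lt_dec i e); auto. exfalso. apply (Hmin e l). rewrite <- He. auto. }
    apply (Z.divide_trans _ (PP p e)). apply PP_divide; auto. rewrite <- He. apply Z.gcd_divide_l.
  - intros [q Hq]. rewrite Hq. apply Hsc. auto.
Qed.

Definition Sk (p : Z) (i j r : nat) : subsetR :=
  fun x y z => exists t, y = PP p j * t /\ (PP p i | x - Z.of_nat r * t).

Lemma classify p S a1 a2 a3 K : prime p -> IsSubringSet S -> IsCotype S a1 a2 a3 -> a1 * a2 * a3 = PP p K ->
  exists i j r, (i <= 2 * j)%nat /\ (r < Z.to_nat (PP p i))%nat /\ forall x y z, S x y z <-> Sk p i j r x y z.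
Proof.
  intros Hp [S0 [Sadd [Sneg [S1 Smul]]]] Hcot HK. pose proof (prime_gt1 p Hp) as Hp1.
  assert (Ssc : forall n x y z, S x y z -> S (n * x) (n * y) (n * z)).
  { assert (Hnat : forall m x y z, S x y z -> S (Z.of_nat m * x) (Z.of_nat m * y) (Z.of_nat m * z)).
    { induction m; intros x y z Hx. simpl. auto. rewrite Nat2Z.inj_succ.
      replace (Z.succ (Z.of_nat m) * x) with (Z.of_nat m * x + x) by ring.
      replace (Z.succ (Z.of_nat m) * y) with (Z.of_nat m * y + y) by ring.
      replace (Z.succ (Z.of_nat m) * z) with (Z.of_nat m * z + z) by ring. auto. }
    intros n x y z Hx. destruct (Z_le_gt_dec 0 n).
    - replace n with (Z.of_nat (Z.to_nat n)) by lia. auto.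
    - replace (n * x) with (- (Z.of_nat (Z.to_nat (- n)) * x)) by lia.
      replace (n * y) with (- (Z.of_nat (Z.to_nat (- n)) * y)) by lia.
      replace (n * z) with (- (Z.of_nat (Z.to_nat (- n)) * z)) by lia. auto. }
  assert (SN : forall x y z, S (PP p K * x) (PP p K * y) (PP p K * z)).
  { apply (U1 S a1 a2 a3 Hcot). rewrite <- HK. exists (a2 * a3). ring. }
  assert (Sz : forall x y z, S x y z <-> S x y 0).
  { intros x y z. split; intros H.
    - assert (A : S (x + (- z) * 0) (y + (- z) * 0) (z + (- z) * 1)) by (apply Sadd; auto; apply Ssc; auto).
      replace (x + (- z) * 0) with x in A by ring. replace (y + (- z) * 0) with y in A by ring.
      replace (z + (- z) * 1) with 0 in A by ring. exact A.
    - assert (A : S (x + z * 0) (y + z * 0) (0 + z * 1)) by (apply Sadd; auto; apply Ssc; auto).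
      replace (x + z * 0) with x in A by ring. replace (y + z * 0) with y in A by ring.
      replace (0 + z * 1) with z in A by ring. exact A. }
  destruct (subgroup_pp p K (fun x => S x 0 0) Hp) as [i Hi]; auto.
  { intros a b Ha Hb. replace 0 with (0 + 0) by ring. auto. }
  { intros a Ha. replace 0 with (- 0) by ring. auto. }
  { replace 0 with (PP p K * 0) by ring. replace (PP p K) with (PP p K * 1) at 1 by ring. auto. }
  destruct (subgroup_pp p K (fun y => exists x, S x y 0) Hp) as [j Hj]; eauto.
  { intros a b [x Ha] [x' Hb]. exists (x + x'). replace 0 with (0 + 0) by ring. auto. }
  { intros a [x Ha]. exists (- x). replace 0 with (- 0) by ring. auto. }
  { exists 0. replace 0 with (PP p K * 0) by ring. replace (PP p K) with (PP p K * 1) at 2 by ring. auto. }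
  destruct (proj2 (Hj (PP p j)) (Z.divide_refl _)) as [x0 Hx0].
  set (r := x0 mod PP p i).
  assert (Hr : 0 <= r < PP p i) by (apply Z.mod_pos_bound; apply PP_pos; auto).
  assert (Sr : S r (PP p j) 0).
  { assert (E : r = x0 + (- (x0 / PP p i)) * PP p i). { unfold r. rewrite Z.mod_eq by (pose proof (PP_pos p i Hp1); lia). ring. }
    assert (A : S (x0 + (- (x0 / PP p i)) * PP p i) (PP p j + 0) (0 + 0)).
    { apply Sadd; auto. apply Hi. apply Z.divide_mul_r, Z.divide_refl. }
    rewrite <- E in A. replace (PP p j + 0) with (PP p j) in A by ring. replace (0 + 0) with 0 in A by ring. exact A. }
  assert (Sr' : forall t, S (r * t) (PP p j * t) 0).
  { intros t. assert (A := Ssc t _ _ _ Sr). replace (t * r) with (r * t) in A by ring.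
    replace (t * PP p j) with (PP p j * t) in A by ring. replace (t * 0) with 0 in A by ring. exact A. }
  exists i, j, (Z.to_nat r). unfold Sk. rewrite Z2Nat.id by lia. repeat split.
  -
    assert (Hm := Smul (r, PP p j, 0) (r, PP p j, 0) Sr Sr). simpl in Hm.
    rewrite !Z.mul_0_r, !Z.add_0_r, !Z.add_0_l in Hm.
    apply Hi in Hm. rewrite <- PP_add in Hm. apply PP_div_le in Hm; auto. lia.
  - pose proof (PP_pos p i Hp1). apply Nat2Z.inj_lt. rewrite !Z2Nat.id; lia.
  - intros H. apply Sz in H. assert (Hy : exists x', S x' y 0) by eauto. apply Hj in Hy.
    destruct Hy as [t Ht]. exists t. split. rewrite Ht; ring.
    apply Hi. assert (A : S (x + (- 1) * (r * t)) (y + (- 1) * (PP p j * t)) (0 + (- 1) * 0)).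
    { apply Sadd; auto. }
    replace (x + (- 1) * (r * t)) with (x - r * t) in A by ring.
    replace (y + (- 1) * (PP p j * t)) with 0 in A by (rewrite Ht; ring). replace (0 + (- 1) * 0) with 0 in A by ring. exact A.
  - intros [t [Ht Hd]]. apply Sz. apply Hi in Hd.
    assert (A : S ((x - r * t) + r * t) (0 + PP p j * t) (0 + 0)) by (apply Sadd; auto).
    replace ((x - r * t) + r * t) with x in A by ring. replace (0 + PP p j * t) with y in A by (rewrite Ht; ring).
    replace (0 + 0) with 0 in A by ring. exact A.
Qed.

End PartH.
Import PartH.

Module PartI.
Import ListNotations.
Local Open Scope Z_scope.

Lemma Sk_subring p i j r : (1 < p) -> (i <= 2 * j)%nat -> IsSubringSet (Sk p i j r).
Proof.
  intros Hp hij. unfold IsSubringSet, Sk. repeat split.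
  - exists 0. split. ring. exists 0. ring.
  - intros a b c a' b' c' [t [Ht Hd]] [t' [Ht' Hd']]. exists (t + t'). split. rewrite Ht, Ht'; ring.
    replace (a + a' - Z.of_nat r * (t + t')) with ((a - Z.of_nat r * t) + (a' - Z.of_nat r * t')) by ring.
    apply Z.divide_add_r; auto.
  - intros a b c [t [Ht Hd]]. exists (- t). split. rewrite Ht; ring.
    replace (- a - Z.of_nat r * - t) with (- (a - Z.of_nat r * t)) by ring. apply Z.divide_opp_r; auto.
  - exists 0. split. ring. exists 0. ring.
  - intros [[x y] z] [[x' y'] z'] [t [Ht Hd]] [t' [Ht' Hd']]. simpl.
    exists (t * z' + z * t'). split. rewrite Ht, Ht'; ring.
    replace (x * z' + y * y' + z * x' - Z.of_nat r * (t * z' + z * t'))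
      with (z' * (x - Z.of_nat r * t) + z * (x' - Z.of_nat r * t') + (PP p j * PP p j) * (t * t')) by (rewrite Ht, Ht'; ring).
    apply Z.divide_add_r; [apply Z.divide_add_r; apply Z.divide_mul_r; auto|].
    apply Z.divide_mul_l. rewrite <- PP_add. apply PP_divide. lia.
Qed.

Lemma Sk_cotype p i j r : prime p -> (i <= 2 * j)%nat -> (r < Z.to_nat (PP p i))%nat ->
  let m := mfun i j (val p (Z.of_nat r)) in
  IsCotype (Sk p i j r) (PP p (i + j - m)) (PP p m) 1.
Proof.
  intros Hp hij hr m. pose proof (prime_gt1 p Hp) as Hp1.
  assert (Hmle := mfun_le i j (val p (Z.of_nat r))). fold m in Hmle.
  split; [lia|]. split; [apply Z.divide_1_l|]. split; [apply PP_divide; lia|].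
  unfold m, Sk. unfold val. destruct (Z.eqb_spec (Z.of_nat r) 0) as [r0|r0].
  -
    simpl mfun. rewrite r0. destruct (le_lt_dec j i).
    + replace (Nat.min i j) with j by lia. replace (i + j - j)%nat with i by lia.
      exists 1, 0, 0, 0, 1, 0, 0, 0, 0. cbv zeta. split.
      * intros x y z. split.
        -- intros [t [Ht Hd]]. repeat split. replace (1 * x + 0 * y + 0 * z) with (x - 0 * t) by ring. auto.
           exists t. rewrite Ht; ring. apply Z.divide_1_l.
        -- intros [H1 [[t Ht] _]]. exists t. split. nia. replace (x - 0 * t) with (1 * x + 0 * y + 0 * z) by ring. auto.
      * intros w1 w2 w3. exists w1, w2, 0. repeat split; try apply Z.divide_1_l; exists 0; ring.
    + replace (Nat.min i j) with i by lia. replace (i + j - i)%nat with j by lia.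
      exists 0, 1, 0, 1, 0, 0, 0, 0, 0. cbv zeta. split.
      * intros x y z. split.
        -- intros [t [Ht Hd]]. repeat split. exists t. rewrite Ht; ring.
           replace (1 * x + 0 * y + 0 * z) with (x - 0 * t) by ring. auto. apply Z.divide_1_l.
        -- intros [[t Ht] [H1 _]]. exists t. split. nia. replace (x - 0 * t) with (1 * x + 0 * y + 0 * z) by ring. auto.
      * intros w1 w2 w3. exists w2, w1, 0. repeat split; try apply Z.divide_1_l; exists 0; ring.
  -
    destruct (val_decomp p Hp1 (Z.of_nat r) r0) as [v [w [Er Nw]]].
    rewrite (vp_spec p _ v w Hp1 Er Nw). simpl mfun.
    assert (wpos : 0 < w). { pose proof (PP_pos p v Hp1). nia. }
    assert (hv : (v < i)%nat).
    { destruct (le_lt_dec i v); auto. exfalso. assert (PP p i <= PP p v) by (destruct (Nat.eq_dec i v); [subst; lia| apply Z.lt_le_incl, PP_lt; auto; lia]).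
      assert (Z.of_nat r < PP p i) by (apply Nat2Z.inj_lt in hr; rewrite Z2Nat.id in hr; auto; pose proof (PP_pos p i Hp1); lia).
      pose proof (PP_pos p v Hp1). nia. }
    set (R := Z.of_nat r) in *.
    destruct (le_lt_dec j v).
    + replace (Nat.min (Nat.min i j) v) with j by lia. replace (i + j - j)%nat with i by lia.
      set (r2 := PP p (v - j) * w).
      assert (Er2 : R = PP p j * r2). { unfold r2. rewrite Er. replace v with (j + (v - j))%nat at 1 by lia. rewrite PP_add. ring. }
      exists 1, (- r2), 0, 0, 1, 0, 0, 0, 0. cbv zeta. split.
      * intros x y z. split.
        -- intros [t [Ht Hd]]. repeat split. replace (1 * x + - r2 * y + 0 * z) with (x - R * t) by (rewrite Ht, Er2; ring). auto.
           exists t. rewrite Ht; ring. apply Z.divide_1_l.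
        -- intros [H1 [[t Ht] _]]. exists t. split. nia. replace (x - R * t) with (1 * x + - r2 * y + 0 * z) by (assert (Ey : y = PP p j * t) by nia; rewrite Ey, Er2; ring). auto.
      * intros w1 w2 w3. exists (w1 + r2 * w2), w2, 0. repeat split; try apply Z.divide_1_l; exists 0; ring.
    + replace (Nat.min (Nat.min i j) v) with v by lia.
      set (A := PP p v). set (B := PP p (i - v)). set (Cc := PP p (j - v)).
      assert (EA : PP p i = A * B) by (unfold A, B; rewrite <- PP_add; f_equal; lia).
      assert (EB : PP p j = A * Cc) by (unfold A, Cc; rewrite <- PP_add; f_equal; lia).
      assert (EC : PP p (i + j - v) = A * B * Cc) by (unfold A, B, Cc; rewrite <- !PP_add; f_equal; lia).
      rewrite EC. fold A.
      assert (Hrp : rel_prime w (PP p i)).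
      { unfold PP. apply Zpow_facts.rel_prime_Zpower_r. lia. apply rel_prime_sym. apply prime_rel_prime; auto. }
      destruct (rel_prime_bezout _ _ Hrp) as [w' v' Hb].
      assert (Hb2 : w * w' = 1 - v' * A * B) by (rewrite EA in Hb; lia).
      assert (Apos : 0 < A) by (apply PP_pos; auto).
      exists (- w' * Cc), 1, 0, w', 0, 0, 0, 0, 0. cbv zeta. split.
      * intros x y z. split.
        -- intros [t [Ht [s Hs]]]. rewrite EA in Hs. rewrite EB in Ht. repeat split.
           ++ exists (A * t * v' - w' * s).
              replace x with (R * t + s * (A * B)) by lia. rewrite Ht, Er. fold A.
              replace (- w' * Cc * ((A * w) * t + s * (A * B)) + 1 * (A * Cc * t) + 0 * z)
                with (A * Cc * t * (1 - w * w') - w' * Cc * s * A * B) by ring.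
              rewrite Hb2. ring.
           ++ exists (w' * w * t + w' * B * s). replace x with (R * t + s * (A * B)) by lia. rewrite Er. fold A. ring.
           ++ apply Z.divide_1_l.
        -- intros [[d Hd] [[e He] _]].
           set (x1 := w * e + x * v' * B).
           assert (Ex : x = A * x1).
           { unfold x1. replace x with (x * (w * w') + x * v' * A * B) at 1 by (rewrite Hb2; ring).
             replace (w' * x + 0 * y + 0 * z) with (w' * x) in He by ring.
             replace (x * (w * w')) with (w * (w' * x)) by ring. rewrite He. ring. }
           exists (w' * x1 + B * d). split.
           ++ rewrite EB. replace y with ((- w' * Cc * x + 1 * y + 0 * z) + w' * Cc * x) by ring. rewrite Hd, Ex. ring.
           ++ rewrite EA. exists (x1 * v' * A - w * d). rewrite Ex, Er. fold A.
              replace (A * x1 - A * w * (w' * x1 + B * d)) with (A * x1 * (1 - w * w') - A * w * B * d) by ring.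
              rewrite Hb2. ring.
      * intros W1 W2 W3. exists (w * W2), (W1 + w' * Cc * (w * W2)), 0. repeat split; try apply Z.divide_1_l.
        -- exists 0. ring.
        -- exists (- v' * B * W2). replace (w' * (w * W2) + 0 * (W1 + w' * Cc * (w * W2)) + 0 * 0 - W2) with ((w * w' - 1) * W2) by ring.
           rewrite Hb2. ring.
Qed.

Definition emb (p : Z) (k : nat * nat * nat) : subsetR * Z * Z * Z :=
  let '(i, j, r) := k in
  (Sk p i j r, PP p (i + j - mfun i j (val p (Z.of_nat r))), PP p (mfun i j (val p (Z.of_nat r))), 1).

Definition validk (p : Z) (k : nat * nat * nat) : Prop :=
  let '(i, j, r) := k in (i <= 2 * j)%nat /\ (r < Z.to_nat (PP p i))%nat.

Lemma emb_index p k : prime p -> validk p k -> ZetaIndex p (emb p k).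
Proof.
  intros Hp. destruct k as [[i j] r]. intros [h1 h2]. simpl. split; [|split].
  - apply Sk_subring; auto. apply prime_gt1; auto.
  - apply Sk_cotype; auto.
  - exists (i + j)%nat. assert (Hmle := mfun_le i j (val p (Z.of_nat r))).
    fold (PP p (i + j)). rewrite Z.mul_1_r, <- PP_add. f_equal. lia.
Qed.

End PartI.
Import PartI.

Module PartJ.
Import ListNotations.
Local Open Scope Z_scope.

Lemma emb_inj p k k' : (1 < p)%Z -> validk p k -> validk p k' -> emb p k = emb p k' -> k = k'.
Proof.
  intros Hp. destruct k as [[i j] r], k' as [[i' j'] r']. intros [h1 h2] [h1' h2'] E.
  simpl in E. injection E as ES _ _.
  assert (HS : forall x y z, Sk p i j r x y z <-> Sk p i' j' r' x y z) by (intros; rewrite ES; tauto).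
  assert (Ei : i = i').
  { assert (A1 : Sk p i' j' r' (PP p i) 0 0). { apply HS. exists 0%Z. split. ring. exists 1%Z. ring. }
    assert (A2 : Sk p i j r (PP p i') 0 0). { apply HS. exists 0%Z. split. ring. exists 1%Z. ring. }
    destruct A1 as [t [Ht Hd]]. destruct A2 as [t' [Ht' Hd']].
    assert (t = 0%Z) by (pose proof (PP_pos p j' Hp); nia). assert (t' = 0%Z) by (pose proof (PP_pos p j Hp); nia). subst.
    rewrite Z.mul_0_r, Z.sub_0_r in Hd, Hd'. apply PP_div_le in Hd; auto. apply PP_div_le in Hd'; auto. lia. }
  subst i'.
  assert (Ej : j = j').
  { assert (A1 : Sk p i j' r' (Z.of_nat r) (PP p j) 0). { apply HS. exists 1%Z. split. ring. exists 0%Z. ring. }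
    assert (A2 : Sk p i j r (Z.of_nat r') (PP p j') 0). { apply HS. exists 1%Z. split. ring. exists 0%Z. ring. }
    destruct A1 as [t [Ht Hd]]. destruct A2 as [t' [Ht' Hd']].
    assert (D1 : (PP p j' | PP p j)%Z) by (exists t; lia). assert (D2 : (PP p j | PP p j')%Z) by (exists t'; lia).
    apply PP_div_le in D1; auto. apply PP_div_le in D2; auto. lia. }
  subst j'.
  assert (A1 : Sk p i j r' (Z.of_nat r) (PP p j) 0). { apply HS. exists 1%Z. split. ring. exists 0%Z. ring. }
  destruct A1 as [t [Ht [q Hq]]].
  assert (t = 1%Z) by (pose proof (PP_pos p j Hp); nia). subst t.
  assert (Z.of_nat r < PP p i)%Z by (apply Nat2Z.inj_lt in h2; rewrite Z2Nat.id in h2; auto; pose proof (PP_pos p i Hp); lia).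
  assert (Z.of_nat r' < PP p i)%Z by (apply Nat2Z.inj_lt in h2'; rewrite Z2Nat.id in h2'; auto; pose proof (PP_pos p i Hp); lia).
  assert (q = 0%Z) by nia. subst q. f_equal. lia.
Qed.

Lemma emb_cover p t : prime p -> ZetaIndex p t ->
  (let '(_, a1, a2, _) := t in (0 < a1)%Z /\ (0 < a2)%Z) ->
  exists k, validk p k /\ t = emb p k.
Proof.
  intros Hp. destruct t as [[[S a1] a2] a3]. intros [Hsub [Hcot [K HK]]] [Ha1 Ha2].
  change (p ^ Z.of_nat K)%Z with (PP p K) in HK.
  pose proof (prime_gt1 p Hp) as Hp1.
  destruct (classify p S a1 a2 a3 K Hp Hsub Hcot HK) as [i [j [r [h1 [h2 HS]]]]].
  assert (ES : S = Sk p i j r).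
  { apply functional_extensionality; intros x. apply functional_extensionality; intros y.
    apply functional_extensionality; intros z. apply propositional_extensionality. apply HS. }
  subst S.
  exists (i, j, r). split. split; auto.
  pose proof (Sk_cotype p i j r Hp h1 h2) as Hc2. cbv zeta in Hc2.
  set (m := mfun i j (val p (Z.of_nat r))) in *.
  simpl. fold m.
  assert (E1 : a1 = PP p (i + j - m)).
  { apply Z.divide_antisym_nonneg; try lia. pose proof (PP_pos p (i + j - m) Hp1); lia.
    - apply (U1 _ _ _ _ Hcot). apply (U1 _ _ _ _ Hc2). apply Z.divide_refl.
    - apply (U1 _ _ _ _ Hc2). apply (U1 _ _ _ _ Hcot). apply Z.divide_refl. }
  assert (Ha2K : (a2 | PP p K)%Z) by (rewrite <- HK; exists (a1 * a3)%Z; ring).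
  assert (E2 : a2 = PP p m).
  { apply Z.divide_antisym_nonneg; try lia. pose proof (PP_pos p m Hp1); lia.
    - apply (U2 p K _ _ _ _ Hp Hcot Ha2 Ha2K). apply (U2 p m _ _ _ _ Hp Hc2). apply PP_pos; auto. apply Z.divide_refl. apply Z.divide_refl.
    - apply (U2 p m _ _ _ _ Hp Hc2). apply PP_pos; auto. apply Z.divide_refl. apply (U2 p K _ _ _ _ Hp Hcot Ha2 Ha2K). apply Z.divide_refl. }
  assert (E3 : a3 = 1%Z).
  { assert (H01 : Sk p i j r 0 0 1) by (destruct Hsub as [_ [_ [_ [H _]]]]; exact H).
    pose proof (U3 _ _ _ _ Hcot H01). destruct Hcot as [Ha3 _]. apply Z.divide_1_r in H. lia. }
  rewrite E1, E2, E3. reflexivity.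
Qed.

Definition Tv (p : Z) (s1 s2 : C) (k : nat * nat * nat) : C :=
  let '(i, j, r) := k in Tt p s1 s2 i j (val p (Z.of_nat r)).

Lemma ZetaTerm_emb p s1 s2 k : ZetaTerm s1 s2 (emb p k) = Tv p s1 s2 k.
Proof. destruct k as [[i j] r]. reflexivity. Qed.

Lemma ZetaTerm_pos s1 s2 t : ZetaTerm s1 s2 t <> RtoC 0 ->
  (let '(_, a1, a2, _) := t in (0 < a1)%Z /\ (0 < a2)%Z).
Proof.
  destruct t as [[[S a1] a2] a3]. unfold ZetaTerm. intros H. split.
  - destruct (Z_lt_le_dec 0 a1); auto. exfalso. apply H. rewrite rpowC_neg. ring. apply IZR_le; auto.
  - destruct (Z_lt_le_dec 0 a2); auto. exfalso. apply H. rewrite (rpowC_neg (IZR a2)). ring. apply IZR_le; auto.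
Qed.

End PartJ.
Import PartJ.

Module PartK.
Import ListNotations.
Local Open Scope R_scope.

Lemma perm_split {T} (l1 l2 : list T) : NoDup l1 -> incl l1 l2 -> NoDup l2 -> exists l3, Permutation l2 (l1 ++ l3).
Proof.
  revert l2. induction l1 as [|a l1 IH]; intros l2 N1 I N2.
  - exists l2. reflexivity.
  - assert (Ha : In a l2) by (apply I; simpl; auto).
    destruct (in_split _ _ Ha) as [u [v E]]. subst l2.
    inversion N1; subst.
    destruct (IH (u ++ v)) as [l3 P]; auto.
    + intros x Hx. assert (In x (u ++ a :: v)) by (apply I; simpl; auto).
      apply in_app_or in H. apply in_or_app. destruct H as [H|[H|H]]; auto. subst. contradiction.
    + eapply NoDup_remove_1; eauto.
    + exists l3. simpl. rewrite <- P. symmetry. apply Permutation_middle.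
Qed.

Lemma rsum_incl {T} (w : T -> R) (l l' : list T) : NoDup l -> incl l l' -> (forall x, 0 <= w x) -> rsum_list w l <= rsum_list w l'.
Proof.
  revert l'. induction l as [|a l IH]; intros l' N I W.
  - simpl. apply rsum_nonneg. auto.
  - assert (Ha : In a l') by (apply I; simpl; auto).
    destruct (in_split _ _ Ha) as [u [v E]]. subst l'.
    inversion N; subst.
    rewrite rsum_app, rsum_cons, rsum_cons.
    assert (rsum_list w l <= rsum_list w (u ++ v)).
    { apply IH; auto. intros x Hx. assert (In x (u ++ a :: v)) by (apply I; simpl; auto).
      apply in_app_or in H. apply in_or_app. destruct H as [H|[H|H]]; auto. subst. contradiction. }
    rewrite rsum_app in H. lra.
Qed.

Lemma NoDup_map_inj {T U} (f : T -> U) (l : list T) :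
  (forall x y, In x l -> In y l -> f x = f y -> x = y) -> NoDup l -> NoDup (map f l).
Proof.
  induction l; intros Hi N; simpl. constructor. inversion N; subst. constructor.
  - intros Hin. apply in_map_iff in Hin. destruct Hin as [y [Ey Hy]]. assert (y = a) by (apply Hi; simpl; auto). subst. contradiction.
  - apply IHl; auto. intros; apply Hi; simpl; auto.
Qed.

Lemma NoDup_flat_map' {T U} (g : T -> list U) (l : list T) :
  NoDup l -> (forall x, NoDup (g x)) -> (forall x y z, In x l -> In y l -> In z (g x) -> In z (g y) -> x = y) ->
  NoDup (flat_map g l).
Proof.
  induction l; intros N Ng D; simpl. constructor. inversion N; subst. apply NoDup_app; auto.
  - apply IHl; auto. intros; eapply D; simpl; eauto.
  - intros z Hz Hz2. apply in_flat_map in Hz2. destruct Hz2 as [y [Hy Hzy]].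
    assert (a = y) by (eapply D; simpl; eauto). subst. contradiction.
Qed.

Lemma exp_mono_le x y : x <= y -> exp x <= exp y.
Proof. intros H. destruct (Req_dec x y). subst; lra. left; apply exp_increasing; lra. Qed.

Lemma NoDup_app_disj {T} (l1 l2 : list T) x : NoDup (l1 ++ l2) -> In x l1 -> In x l2 -> False.
Proof.
  induction l1; intros N H1 H2. destruct H1. simpl in N. inversion N; subst.
  destruct H1 as [H1|H1]. subst. apply H3. apply in_or_app; auto. eauto.
Qed.

Section P.
Variable p : Z.
Hypothesis Hp : (1 < p)%Z.

Definition trip (n : nat) : list (nat * nat * nat) :=
  flat_map (fun i => flat_map (fun j => if (i <=? 2 * j)%nat then map (fun r => (i, j, r)) (seq 0 (Z.to_nat (PP p i))) else []) (seq 0 n)) (seq 0 n).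

Lemma in_trip n i j r : In (i, j, r) (trip n) <-> ((i < n)%nat /\ (j < n)%nat /\ validk p (i, j, r)).
Proof.
  unfold trip, validk. rewrite in_flat_map. split.
  - intros [i' [Hi' H]]. rewrite in_flat_map in H. destruct H as [j' [Hj' H]].
    destruct (Nat.leb_spec i' (2 * j')); [|destruct H].
    apply in_map_iff in H. destruct H as [r' [E Hr]]. injection E; intros; subst.
    apply in_seq in Hi', Hj', Hr. repeat split; lia.
  - intros [h1 [h2 [h3 h4]]]. exists i. split. apply in_seq; lia. rewrite in_flat_map. exists j. split. apply in_seq; lia.
    destruct (Nat.leb_spec i (2 * j)); [|lia]. apply in_map_iff. exists r. split; auto. apply in_seq; lia.
Qed.

Lemma trip_valid n k : In k (trip n) -> validk p k.
Proof. destruct k as [[i j] r]. intros H. apply in_trip in H. tauto. Qed.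

Lemma trip_mono n m : (n <= m)%nat -> incl (trip n) (trip m).
Proof. intros h [[i j] r] H. apply in_trip in H. apply in_trip. intuition lia. Qed.

Lemma NoDup_trip n : NoDup (trip n).
Proof.
  unfold trip. apply NoDup_flat_map'. apply seq_NoDup.
  - intros i. apply NoDup_flat_map'. apply seq_NoDup.
    + intros j. destruct (i <=? 2 * j)%nat. apply NoDup_map_inj. intros x y _ _ E. injection E; auto. apply seq_NoDup. constructor.
    + intros x y z _ _ H1 H2. destruct (i <=? 2 * x)%nat; [|destruct H1]. destruct (i <=? 2 * y)%nat; [|destruct H2].
      apply in_map_iff in H1, H2. destruct H1 as [r1 [E1 _]]. destruct H2 as [r2 [E2 _]]. subst. injection E2; auto.
  - intros x y z _ _ H1 H2. apply in_flat_map in H1, H2. destruct H1 as [j1 [_ H1]]. destruct H2 as [j2 [_ H2]].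
    destruct (x <=? 2 * j1)%nat; [|destruct H1]. destruct (y <=? 2 * j2)%nat; [|destruct H2].
    apply in_map_iff in H1, H2. destruct H1 as [r1 [E1 _]]. destruct H2 as [r2 [E2 _]]. subst. injection E2; auto.
Qed.

Lemma csum_trip s1 s2 n : csum_list (Tv p s1 s2) (trip n) = Zn p s1 s2 n.
Proof.
  unfold trip, Zn. rewrite csum_flat_map. unfold csum_nat. apply csum_ext. intros i _.
  rewrite csum_flat_map. apply csum_ext. intros j _. destruct (i <=? 2 * j)%nat.
  - rewrite csum_map. reflexivity.
  - reflexivity.
Qed.

Lemma rsum_trip (h : nat -> nat -> R) n :
  rsum_list (fun k => let '(i, j, _) := k in h i j) (trip n) =
  rsum_nat n (fun i => rsum_nat n (fun j => if (i <=? 2 * j)%nat then IZR p ^ i * h i j else 0)).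
Proof.
  unfold trip, rsum_nat. rewrite rsum_flat_map. apply rsum_ext. intros i _.
  rewrite rsum_flat_map. apply rsum_ext. intros j _. destruct (i <=? 2 * j)%nat.
  - rewrite rsum_map. fold (rsum_nat (Z.to_nat (PP p i)) (fun _ => h i j)). rewrite rsum_nat_const.
    rewrite INR_IZR_INZ, Z2Nat.id by (pose proof (PP_pos p i Hp); lia). rewrite IZR_PP; auto.
  - reflexivity.
Qed.

Definition bnd (i j : nat) : R := / IZR p ^ (3 * (i + j)).

Lemma exp_INR_ln n : exp (INR n * ln (IZR p)) = IZR p ^ n.
Proof. rewrite <- ln_pow by (apply IZRp_pos; auto). apply exp_ln. apply powp_pos; auto. Qed.

Lemma Cmod_rpow_PP k s : 3 < Re s -> Cmod (rpowC (IZR (PP p k)) (- s)) <= / IZR p ^ (3 * k).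
Proof.
  intros Hs. rewrite rpowC_pos by (rewrite IZR_PP; auto; apply powp_pos; auto).
  rewrite Cmod_cexp, re_scal_l, re_opp, ln_PP by auto.
  rewrite <- exp_INR_ln, <- exp_Ropp.
  apply exp_mono_le. rewrite mult_INR. simpl INR.
  assert (0 <= ln (IZR p)) by (left; rewrite <- ln_1; apply ln_increasing; [lra|apply IZRp_gt1; auto]).
  assert (0 <= INR k) by apply pos_INR. assert (0 <= INR k * ln (IZR p)) by (apply Rmult_le_pos; auto). nra.
Qed.

Lemma Cmod_Tv s1 s2 i j r : 3 < Re s1 -> 3 < Re s2 -> Cmod (Tv p s1 s2 (i, j, r)) <= bnd i j.
Proof.
  intros H1 H2. unfold Tv, Tt, bnd. rewrite Cmod_mult.
  set (m := mfun i j (val p (Z.of_nat r))). assert (Hm := mfun_le i j (val p (Z.of_nat r))). fold m in Hm.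
  replace (3 * (i + j))%nat with (3 * (i + j - m) + 3 * m)%nat by lia.
  rewrite pow_add, Rinv_mult. apply Rmult_le_compat; try apply Cmod_ge_0; apply Cmod_rpow_PP; auto.
Qed.

Lemma gbound N i j : (N <= Nat.max i j)%nat -> IZR p ^ i * bnd i j <= (/ 2) ^ N * ((/ 2) ^ i * (/ 4) ^ j).
Proof.
  intros h. unfold bnd. rewrite !pow_inv. set (P := IZR p).
  assert (P2 : 2 <= P) by (unfold P; apply IZR_le; lia).
  assert (E : P ^ i * / P ^ (3 * (i + j)) = / (P ^ (2 * i) * P ^ (3 * j))).
  { replace (3 * (i + j))%nat with (i + (2 * i + 3 * j))%nat by lia. rewrite !pow_add.
    assert (0 < P ^ i) by (apply pow_lt; lra). assert (0 < P ^ (2 * i)) by (apply pow_lt; lra).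
    assert (0 < P ^ (3 * j)) by (apply pow_lt; lra). field. lra. }
  rewrite E. rewrite <- !Rinv_mult. apply Rinv_le_contravar.
  - repeat apply Rmult_lt_0_compat; apply pow_lt; lra.
  - replace 4 with (2 ^ 2) by (simpl; lra). rewrite <- pow_mult.
    apply Rle_trans with (2 ^ (i + j) * (2 ^ i * 2 ^ (2 * j))).
    + apply Rmult_le_compat_r. apply Rmult_le_pos; apply pow_le; lra. apply Rle_pow; lia || lra.
    + rewrite <- !pow_add. replace (i + j + (i + 2 * j))%nat with (2 * i + 3 * j)%nat by lia.
      apply pow_incr; lra.
Qed.

Lemma geom_le2 q M : 0 <= q <= / 2 -> rsum_nat M (fun i => q ^ i) <= 2.
Proof.
  intros Hq. assert (Hnn : forall M, 0 <= rsum_nat M (fun i => q ^ i)).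
  { intros. apply rsum_nonneg. intros; apply pow_le; lra. }
  induction M. unfold rsum_nat; simpl; lra.
  rewrite rsum_nat_S. rewrite (rsum_nat_ext M _ (fun k => q * q ^ k)) by (intros; reflexivity).
  unfold rsum_nat at 1. rewrite <- rsum_scal. fold (rsum_nat M (fun i => q ^ i)). rewrite pow_O.
  change (rsum_list (pow q) (seq 0 M)) with (rsum_nat M (fun i => q ^ i)). pose proof (Hnn M). nra.
Qed.

Definition gN (N : nat) (k : nat * nat * nat) : R :=
  let '(i, j, _) := k in if (N <=? Nat.max i j)%nat then bnd i j else 0.

Lemma gN_nonneg N k : 0 <= gN N k.
Proof. destruct k as [[i j] r]. unfold gN, bnd. destruct (N <=? Nat.max i j)%nat; [|lra].
  left. apply Rinv_0_lt_compat, powp_pos; auto. Qed.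

Lemma trip_tail N M : rsum_list (gN N) (trip M) <= 4 * / 2 ^ N.
Proof.
  unfold gN. rewrite (rsum_trip (fun i j => if (N <=? Nat.max i j)%nat then bnd i j else 0)).
  apply Rle_trans with (rsum_nat M (fun i => rsum_nat M (fun j => (/ 2) ^ N * ((/ 2) ^ i * (/ 4) ^ j)))).
  - apply rsum_nat_le. intros i _. apply rsum_nat_le. intros j _.
    assert (0 <= (/ 2) ^ N * ((/ 2) ^ i * (/ 4) ^ j)) by (repeat apply Rmult_le_pos; apply pow_le; lra).
    destruct (i <=? 2 * j)%nat; auto. destruct (Nat.leb_spec N (Nat.max i j)).
    + apply gbound; auto.
    + rewrite Rmult_0_r. auto.
  - rewrite (rsum_nat_ext M _ (fun i => (/ 2) ^ N * (/ 2) ^ i * rsum_nat M (fun j => (/ 4) ^ j))).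
    2:{ intros. unfold rsum_nat at 2. rewrite rsum_scal. apply rsum_ext. intros; ring. }
    rewrite (rsum_nat_ext M _ (fun i => ((/ 2) ^ N * rsum_nat M (fun j => (/ 4) ^ j)) * (/ 2) ^ i)) by (intros; ring).
    unfold rsum_nat at 1. rewrite <- rsum_scal. fold (rsum_nat M (fun i => (/ 2) ^ i)).
    pose proof (geom_le2 (/ 2) M ltac:(lra)). pose proof (geom_le2 (/ 4) M ltac:(lra)).
    assert (0 <= rsum_nat M (fun j => (/ 4) ^ j)) by (apply rsum_nonneg; intros; apply pow_le; lra).
    assert (0 <= rsum_nat M (fun j => (/ 2) ^ j)) by (apply rsum_nonneg; intros; apply pow_le; lra).
    rewrite pow_inv. assert (0 < / 2 ^ N) by (apply Rinv_0_lt_compat, pow_lt; lra).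
    assert (rsum_nat M (fun j => (/ 4) ^ j) * rsum_nat M (fun i => (/ 2) ^ i) <= 4) by nra. change (rsum_list (pow (/ 2)) (seq 0 M)) with (rsum_nat M (fun i => (/ 2) ^ i)). nra.
Qed.

Lemma exists_M (Ks : list (nat * nat * nat)) : (forall k, In k Ks -> validk p k) -> exists M, incl Ks (trip M).
Proof.
  induction Ks as [|[[i j] r] Ks IH]; intros Hv.
  - exists 0%nat. intros x [].
  - destruct IH as [M HM]. intros; apply Hv; simpl; auto.
    exists (Nat.max M (S (Nat.max i j))). intros x [Hx|Hx].
    + subst x. apply in_trip. split; [lia|split;[lia|]]. apply Hv; simpl; auto.
    + eapply trip_mono; [|apply HM; exact Hx]. lia.
Qed.

Lemma tail_list s1 s2 N Ks : 3 < Re s1 -> 3 < Re s2 -> NoDup Ks ->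
  (forall k, In k Ks -> validk p k /\ ~ In k (trip N)) ->
  rsum_list (fun k => Cmod (Tv p s1 s2 k)) Ks <= 4 * / 2 ^ N.
Proof.
  intros H1 H2 ND Hk. destruct (exists_M Ks) as [M HM]. intros; apply Hk; auto.
  apply Rle_trans with (rsum_list (gN N) Ks).
  - apply rsum_le. intros [[i j] r] Hin. destruct (Hk _ Hin) as [Hv Hn]. unfold gN.
    destruct (Nat.leb_spec N (Nat.max i j)).
    + apply Cmod_Tv; auto.
    + exfalso. apply Hn. apply in_trip. split; [lia|split;[lia|auto]].
  - apply Rle_trans with (rsum_list (gN N) (trip M)).
    + apply rsum_incl; auto. apply gN_nonneg.
    + apply trip_tail.
Qed.

Lemma Zn_cauchy s1 s2 n m : 3 < Re s1 -> 3 < Re s2 -> (n <= m)%nat ->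
  Cmod (Zn p s1 s2 m - Zn p s1 s2 n) <= 4 * / 2 ^ n.
Proof.
  intros H1 H2 h. destruct (perm_split (trip n) (trip m)) as [l3 P].
  apply NoDup_trip. apply trip_mono; auto. apply NoDup_trip.
  rewrite <- !csum_trip. rewrite (csum_perm _ _ _ P), csum_app.
  replace (csum_list (Tv p s1 s2) (trip n) + csum_list (Tv p s1 s2) l3 - csum_list (Tv p s1 s2) (trip n))%C
    with (csum_list (Tv p s1 s2) l3) by ring.
  eapply Rle_trans. apply Cmod_csum.
  assert (ND : NoDup (trip n ++ l3)) by (eapply Permutation_NoDup; eauto; apply NoDup_trip).
  apply tail_list; auto. eapply NoDup_app_remove_l; eauto.
  intros k Hk. split.
  - apply (trip_valid m). apply (Permutation_in _ (Permutation_sym P)). apply in_or_app; auto.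
  - intros Hn. eapply NoDup_app_disj; eauto.
Qed.

End P.

Lemma INR_le_pow2 n : INR n <= 2 ^ n.
Proof. induction n. simpl; lra. rewrite S_INR. simpl. assert (1 <= 2 ^ n) by (apply pow_R1_Rle; lra). lra. Qed.

Lemma small_N c eps : 0 < eps -> exists N, c * / 2 ^ N < eps.
Proof.
  intros He. set (x := Rabs c / eps). destruct (archimed x) as [H1 _].
  assert (0 <= x) by (unfold x; apply Rmult_le_pos; [apply Rabs_pos| left; apply Rinv_0_lt_compat; auto]).
  exists (Z.to_nat (up x)).
  assert (Hup : (0 <= up x)%Z) by (apply le_IZR; lra).
  assert (E : INR (Z.to_nat (up x)) = IZR (up x)) by (rewrite INR_IZR_INZ, Z2Nat.id; auto).
  pose proof (INR_le_pow2 (Z.to_nat (up x))). set (P := 2 ^ Z.to_nat (up x)) in *.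
  assert (P > x) by lra. assert (0 < P) by lra.
  apply Rle_lt_trans with (Rabs c * / P). apply Rmult_le_compat_r. left; apply Rinv_0_lt_compat; auto. apply Rle_abs.
  unfold x in H2. apply (Rmult_lt_reg_r P); auto. rewrite Rmult_assoc, Rinv_l by lra.
  apply (Rmult_lt_reg_r (/ eps)). apply Rinv_0_lt_compat; auto.
  replace (eps * P * / eps) with P by (field; lra). lra.
Qed.

Lemma inv2_mono N n : (N <= n)%nat -> / 2 ^ n <= / 2 ^ N.
Proof. intros h. apply Rinv_le_contravar. apply pow_lt; lra. apply Rle_pow; auto; lra. Qed.

Lemma Cmod_le_sum z : Cmod z <= Rabs (Re z) + Rabs (Im z).
Proof.
  destruct z as [a b]. unfold Cmod. simpl.
  pose proof (Rabs_pos a). pose proof (Rabs_pos b). pose proof (Rsqr_abs a). pose proof (Rsqr_abs b). unfold Rsqr in *.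
  rewrite <- (sqrt_square (Rabs a + Rabs b)) by lra.
  apply sqrt_le_1_alt. nra.
Qed.

Lemma im_le_Cmod z : Rabs (Im z) <= Cmod z.
Proof. eapply Rle_trans; [apply Rmax_r|apply Rmax_Cmod]. Qed.

Lemma real_limit (u : nat -> R) : (forall n m, (n <= m)%nat -> Rabs (u m - u n) <= 4 * / 2 ^ n) ->
  exists l, forall n, Rabs (u n - l) <= 4 * / 2 ^ n.
Proof.
  intros Hc.
  assert (Cc : Cauchy_crit u).
  { intros eps He. destruct (small_N 4 eps He) as [N HN]. exists N. intros n m hn hm. unfold Rdist.
    destruct (le_ge_dec n m).
    - rewrite Rabs_minus_sym. eapply Rle_lt_trans. apply Hc; auto. eapply Rle_lt_trans; [|exact HN].
      apply Rmult_le_compat_l; [lra|]. apply inv2_mono; lia.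
    - eapply Rle_lt_trans. apply Hc; lia. eapply Rle_lt_trans; [|exact HN].
      apply Rmult_le_compat_l; [lra|]. apply inv2_mono; lia. }
  destruct (Rcomplete.R_complete u Cc) as [l Hl]. exists l. intros n.
  destruct (Rle_dec (Rabs (u n - l)) (4 * / 2 ^ n)) as [h|h]; auto. exfalso.
  set (e := Rabs (u n - l) - 4 * / 2 ^ n). assert (e > 0) by (unfold e; lra).
  destruct (Hl e H) as [N HN]. specialize (HN (Nat.max n N) ltac:(lia)). unfold Rdist in HN.
  specialize (Hc n (Nat.max n N) ltac:(lia)).
  assert (Rabs (u n - l) <= Rabs (u (Nat.max n N) - u n) + Rabs (u (Nat.max n N) - l)).
  { replace (u n - l) with (- (u (Nat.max n N) - u n) + (u (Nat.max n N) - l)) by ring.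
    eapply Rle_trans. apply Rabs_triang. rewrite Rabs_Ropp. lra. }
  unfold e in HN. lra.
Qed.

Lemma Zn_limit p s1 s2 : (1 < p)%Z -> 3 < Re s1 -> 3 < Re s2 ->
  exists L, forall n, Cmod (Zn p s1 s2 n - L) <= 8 * / 2 ^ n.
Proof.
  intros Hp H1 H2.
  destruct (real_limit (fun n => Re (Zn p s1 s2 n))) as [lr Hr].
  { intros n m h. eapply Rle_trans; [|apply (Zn_cauchy p Hp s1 s2 n m); auto].
    replace (Re (Zn p s1 s2 m) - Re (Zn p s1 s2 n)) with (Re (Zn p s1 s2 m - Zn p s1 s2 n)) by (unfold Cminus; rewrite re_plus, re_opp; ring).
    apply re_le_Cmod. }
  destruct (real_limit (fun n => Im (Zn p s1 s2 n))) as [li Hi].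
  { intros n m h. eapply Rle_trans; [|apply (Zn_cauchy p Hp s1 s2 n m); auto].
    replace (Im (Zn p s1 s2 m) - Im (Zn p s1 s2 n)) with (Im (Zn p s1 s2 m - Zn p s1 s2 n)) by (unfold Cminus; rewrite im_plus, im_opp; ring).
    apply im_le_Cmod. }
  exists (lr, li). intros n. eapply Rle_trans. apply Cmod_le_sum.
  replace (Re (Zn p s1 s2 n - (lr, li))) with (Re (Zn p s1 s2 n) - lr) by (unfold Cminus; rewrite re_plus, re_opp; change (Re (lr, li)) with lr; ring).
  replace (Im (Zn p s1 s2 n - (lr, li))) with (Im (Zn p s1 s2 n) - li) by (unfold Cminus; rewrite im_plus, im_opp; change (Im (lr, li)) with li; ring).
  specialize (Hr n). specialize (Hi n). lra.
Qed.

End PartK.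
Import PartK.

Module PartL.
Import ListNotations.
Local Open Scope R_scope.

Lemma coding p s1 s2 N : prime p -> forall l3, NoDup l3 ->
  (forall t, In t l3 -> ZetaIndex p t /\ ~ In t (map (emb p) (trip p N))) ->
  exists Ks, NoDup Ks /\ (forall k, In k Ks -> validk p k /\ ~ In k (trip p N)) /\
    rsum_list (fun t => Cmod (ZetaTerm s1 s2 t)) l3 = rsum_list (fun k => Cmod (Tv p s1 s2 k)) Ks /\
    (forall k, In k Ks -> In (emb p k) l3).
Proof.
  intros Hp. induction l3 as [|t l3 IH]; intros ND Ht.
  - exists []. split. constructor. split. intros k0 []. split. reflexivity. intros k0 [].
  - inversion ND; subst. destruct IH as [Ks [N1 [N2 [N3 N4]]]]; auto. intros; apply Ht; simpl; auto.
    destruct (classic (ZetaTerm s1 s2 t = RtoC 0)) as [Z0|Z0].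
    + exists Ks. split; auto. split; auto. split. rewrite rsum_cons, N3, Z0, Cmod_0. ring.
      intros k Hk. simpl. right. auto.
    + destruct (Ht t (or_introl eq_refl)) as [Hzi Hnot].
      destruct (emb_cover p t Hp Hzi (ZetaTerm_pos s1 s2 t Z0)) as [k [Hv Ek]].
      exists (k :: Ks). split; [|split; [|split]].
      * constructor; auto. intros Hk. apply N4 in Hk. rewrite <- Ek in Hk. contradiction.
      * intros k' [E|E]. subst k'. split; auto. intros Hin. apply Hnot. rewrite Ek. apply in_map. auto. apply N2; auto.
      * rewrite !rsum_cons, N3, Ek, ZetaTerm_emb. reflexivity.
      * intros k' [E|E]. subst k'. rewrite <- Ek. simpl; auto. simpl. right. auto.
Qed.

Theorem main (p : Z) (hp : prime p) :
  exists B : R, forall s1 s2 : C, B < Re s1 -> B < Re s2 ->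
    exists I : C,
      HaarIntegral p s1 s2 I /\
      HasSum (ZetaIndex p) (ZetaTerm s1 s2)
        (Cmult (RtoC (/ (1 - / IZR p) ^ 2)) I).
Proof.
  pose proof (prime_gt1 p hp) as Hp.
  exists 3. intros s1 s2 H1 H2.
  destruct (Zn_limit p s1 s2 Hp H1 H2) as [L HL].
  set (c := (1 - / IZR p) ^ 2).
  assert (Pp : 1 < IZR p) by (apply IZRp_gt1; auto).
  assert (Hc0 : 0 < c) by (unfold c; apply pow_lt; assert (/ IZR p < 1) by (rewrite <- Rinv_1; apply Rinv_lt_contravar; lra); lra).
  assert (Hc1 : c <= 1).
  { unfold c. assert (0 < / IZR p) by (apply Rinv_0_lt_compat; lra).
    assert (/ IZR p < 1) by (rewrite <- Rinv_1; apply Rinv_lt_contravar; lra). simpl. nra. }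
  exists (RtoC c * L)%C. split.
  - intros eps He. destruct (small_N 8 eps He) as [N HN]. exists N. intros n hn.
    unfold RiemannSum. fold (RiemannSum p s1 s2 n). rewrite Riemann_Zn; auto. fold c.
    replace (RtoC c * Zn p s1 s2 n - RtoC c * L)%C with (RtoC c * (Zn p s1 s2 n - L))%C by ring.
    rewrite Cmod_mult, Cmod_R, Rabs_right by lra.
    eapply Rle_lt_trans; [|exact HN].
    apply Rle_trans with (1 * (8 * / 2 ^ n)).
    apply Rmult_le_compat; auto; try lra. apply Cmod_ge_0.
    rewrite Rmult_1_l. apply Rmult_le_compat_l; [lra|]. apply inv2_mono; auto.
  - replace (RtoC (/ c) * (RtoC c * L))%C with L.
    2:{ rewrite Cmult_assoc, <- RtoC_mult. fold c. rewrite Rinv_l by lra. ring. }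
    intros eps He. destruct (small_N 12 eps He) as [N HN].
    exists (map (emb p) (trip p N)). split; [|split].
    + apply NoDup_map_inj. intros x y Hx Hy E. apply (emb_inj p x y Hp); auto; eapply trip_valid; eauto.
      apply NoDup_trip; auto.
    + intros t Ht. apply in_map_iff in Ht. destruct Ht as [k [Ek Hk]]. subst. apply emb_index; auto.
      eapply trip_valid; eauto.
    + intros F NF HF Hincl.
      assert (ND0 : NoDup (map (emb p) (trip p N))).
      { apply NoDup_map_inj. intros x y Hx Hy E. apply (emb_inj p x y Hp); auto; eapply trip_valid; eauto.
        apply NoDup_trip; auto. }
      destruct (perm_split _ _ ND0 Hincl NF) as [l3 P].
      assert (NDa : NoDup (map (emb p) (trip p N) ++ l3)) by (eapply Permutation_NoDup; eauto).
      destruct (coding p s1 s2 N hp l3) as [Ks [K1 [K2 [K3 _]]]].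
      { eapply NoDup_app_remove_l; eauto. }
      { intros t Ht. split. apply HF. apply (Permutation_in _ (Permutation_sym P)). apply in_or_app; auto.
        intros Hin. eapply NoDup_app_disj; eauto. }
      rewrite (csum_perm _ _ _ P), csum_app, csum_map.
      rewrite (csum_ext _ (Tv p s1 s2)) by (intros; apply ZetaTerm_emb).
      rewrite csum_trip; auto.
      replace (Zn p s1 s2 N + csum_list (ZetaTerm s1 s2) l3 - L)%C
        with ((Zn p s1 s2 N - L) + csum_list (ZetaTerm s1 s2) l3)%C by ring.
      eapply Rle_lt_trans. apply Cmod_triangle.
      assert (A1 := HL N).
      assert (A2 : Cmod (csum_list (ZetaTerm s1 s2) l3) <= 4 * / 2 ^ N).
      { eapply Rle_trans. apply Cmod_csum. rewrite K3. apply tail_list; auto. }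
      lra.
Qed.

End PartL.
Import PartL.

Local Open Scope R_scope.

Theorem proposition4 (p : Z) (hp : prime p) :
  exists B : R, forall s1 s2 : C, B < Re s1 -> B < Re s2 ->
    exists I : C,
      HaarIntegral p s1 s2 I /\
      HasSum (ZetaIndex p) (ZetaTerm s1 s2)
        (Cmult (RtoC (/ (1 - / IZR p) ^ 2)) I).
Proof.
  exact (main p hp).
Qed.
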